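(* Let $n\ge 237$ be an integer. Then there exists a really perverse relative equilibrium of the Newtonian planar $(1+2n)$-body problem whose configuration consists of a central mass at the origin surrounded by two regular $n$-gons sharing the same symmetry axes and shifted by the angle $\pi/n$, i.e. with vertices $\rho_1 e^{i(2\pi l/n+\pi/n)}$ and $\rho_2 e^{2\pi i l/n}$, $l=0,\dots,n-1$, for some radii $0<\rho_1\le \rho_2$.
   Context: The Newtonian planar $N$-body problem (gravitational constant $1$): bodies with masses $\mu_i>0$ at positions $r_i\in\mathbb{C}$ satisfy $\mu_i\ddot r_i=\sum_{j\ne i}\mu_i\mu_j\,\frac{r_j-r_i}{|r_j-r_i|^3}$. A relative equilibrium (angular velocity $1$) of a configuration $(r_1,\dots,r_N)$ is the motion $r_i(t)=r_ie^{it}$ when it is a solution. For the configuration above, a mass system is a vector $(m_0,m_1,m_2)$ of positive numbers: mass $m_0$ at the center, mass $m_j$ at every vertex of the $j$-th polygon; its total mass is $m_0+n(m_1+m_2)$ and its center of mass is the origin. The relative equilibrium is really perverse if there exist two distinct mass systems with the same total mass and the same center of mass for each of which $r_i(t)=r_ie^{it}$ is a solution. *)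

(* Defs.v *)
From Stdlib Require Import Reals Arith.
From Coquelicot Require Import Coquelicot.
Open Scope R_scope.

Definition newton_rhs (N : nat) (mu : nat -> R) (r : nat -> C) (i : nat) : C :=
  sum_n (fun j => if Nat.eqb j i then RtoC 0
                  else Cmult (RtoC (mu i * mu j / (Cmod (Cminus (r j) (r i))) ^ 3))
                             (Cminus (r j) (r i))) (N - 1).

Definition is_nbody_solution (N : nat) (mu : nat -> R) (r : nat -> R -> C) : Prop :=
  exists v a : nat -> R -> C,
    forall i, (i < N)%nat -> forall t : R,
      is_derive (r i) t (v i t) /\ is_derive (v i) t (a i t) /\
      Cmult (RtoC (mu i)) (a i t) = newton_rhs N mu (fun j => r j t) i.

Definition rel_eq_motion (x : nat -> C) : nat -> R -> C :=
  fun k t => Cmult (x k) (cos t, sin t).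

Definition two_ngon_config (n : nat) (rho1 rho2 : R) (k : nat) : C :=
  if Nat.eqb k 0 then RtoC 0
  else if Nat.leb k n then
    let th := 2 * PI * INR (k - 1) / INR n + PI / INR n in
    (rho1 * cos th, rho1 * sin th)
  else
    let th := 2 * PI * INR (k - 1 - n) / INR n in
    (rho2 * cos th, rho2 * sin th).

Definition mass_of_system (n : nat) (m : R * R * R) (k : nat) : R :=
  let '(m0, m1, m2) := m in
  if Nat.eqb k 0 then m0 else if Nat.leb k n then m1 else m2.

Definition positive_system (m : R * R * R) : Prop :=
  let '(m0, m1, m2) := m in 0 < m0 /\ 0 < m1 /\ 0 < m2.

Definition total_mass (n : nat) (m : R * R * R) : R :=
  let '(m0, m1, m2) := m in m0 + INR n * (m1 + m2).

Definition mass_moment (N : nat) (mu : nat -> R) (x : nat -> C) : C :=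
  sum_n (fun k => Cmult (RtoC (mu k)) (x k)) (N - 1).

Definition really_perverse (n : nat) (x : nat -> C) : Prop :=
  exists m m' : R * R * R,
    m <> m' /\ positive_system m /\ positive_system m' /\
    total_mass n m = total_mass n m' /\
    mass_moment (1 + 2 * n) (mass_of_system n m) x = RtoC 0 /\
    mass_moment (1 + 2 * n) (mass_of_system n m') x = RtoC 0 /\
    is_nbody_solution (1 + 2 * n) (mass_of_system n m) (rel_eq_motion x) /\
    is_nbody_solution (1 + 2 * n) (mass_of_system n m') (rel_eq_motion x).

(* Main.v *)
Require Import Defs.
From Stdlib Require Import Reals Arith Lra Lia ZArith QArith Qreals Machin Ranalysis5.
From Coquelicot Require Import Coquelicot.
Open Scope R_scope.

Fixpoint csum (f : nat -> R) (k : nat) : R :=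
  match k with O => 0 | S k' => csum f k' + f k' end.

Lemma csum_ext f g k : (forall l, (l < k)%nat -> f l = g l) -> csum f k = csum g k.
Proof.
  induction k; intros H; simpl; auto.
  rewrite IHk by (intros; apply H; lia). rewrite H by lia. reflexivity.
Qed.

Lemma csum_plus f g k : csum (fun l => f l + g l) k = csum f k + csum g k.
Proof. induction k; simpl; [ring| rewrite IHk; ring]. Qed.

Lemma csum_minus f g k : csum (fun l => f l - g l) k = csum f k - csum g k.
Proof. induction k; simpl; [ring| rewrite IHk; ring]. Qed.

Lemma csum_scal c f k : csum (fun l => c * f l) k = c * csum f k.
Proof. induction k; simpl; [ring| rewrite IHk; ring]. Qed.

Lemma csum_opp f k : csum (fun l => - f l) k = - csum f k.
Proof. induction k; simpl; [ring| rewrite IHk; ring]. Qed.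

Lemma csum_split f a b : csum f (a + b) = csum f a + csum (fun l => f (a + l)%nat) b.
Proof.
  induction b; simpl.
  - rewrite Nat.add_0_r; ring.
  - rewrite Nat.add_succ_r; simpl; rewrite IHb; ring.
Qed.

Lemma csum_le f g k : (forall l, (l < k)%nat -> f l <= g l) -> csum f k <= csum g k.
Proof.
  induction k; intros H; simpl; [lra|].
  assert (csum f k <= csum g k) by (apply IHk; intros; apply H; lia).
  assert (f k <= g k) by (apply H; lia). lra.
Qed.

Lemma csum_nonneg f k : (forall l, (l < k)%nat -> 0 <= f l) -> 0 <= csum f k.
Proof.
  intros H. replace 0 with (csum (fun _ => 0) k).
  apply csum_le; auto. induction k; simpl; auto. rewrite IHk; [ring|intros; apply H; lia].
Qed.

Lemma csum_S_l f k : csum f (S k) = f O + csum (fun l => f (S l)) k.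
Proof.
  replace (S k) with (1 + k)%nat by lia. rewrite csum_split. simpl. ring.
Qed.

Lemma csum_rev f k : csum (fun l => f (k - 1 - l)%nat) k = csum f k.
Proof.
  induction k.
  - reflexivity.
  - rewrite csum_S_l. simpl csum at 2.
    replace (S k - 1 - 0)%nat with k by lia.
    rewrite <- IHk. rewrite Rplus_comm. f_equal.
    apply csum_ext. intros l Hl. f_equal. lia.
Qed.

Lemma sum_n_C (f : nat -> C) (N : nat) :
  sum_n f N = (csum (fun j => fst (f j)) (S N), csum (fun j => snd (f j)) (S N)).
Proof.
  induction N.
  - rewrite sum_O. simpl. destruct (f O); simpl. f_equal; ring.
  - rewrite sum_Sn, IHN. simpl csum at 3 4. 
    change (plus (csum (fun j => fst (f j)) (S N), csum (fun j => snd (f j)) (S N)) (f (S N)))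
      with (Cplus (csum (fun j => fst (f j)) (S N), csum (fun j => snd (f j)) (S N)) (f (S N))).
    unfold Cplus. simpl. reflexivity.
Qed.

Definition Ssum (n : nat) (f : R -> R) (b : R) : R :=
  csum (fun l => f (2*PI*INR l / INR n + b)) n.

Lemma Ssum_shift1 n f b : (0 < n)%nat -> (forall x, f (x + 2*PI) = f x) ->
  Ssum n f (b + 2*PI/INR n) = Ssum n f b.
Proof.
  intros Hn Hp. unfold Ssum.
  assert (Hn' : INR n <> 0) by (apply not_0_INR; lia).
  set (g := fun l => f (2 * PI * INR l / INR n + b)).
  transitivity (csum (fun l => g (S l)) n).
  { apply csum_ext; intros l _. unfold g. f_equal. rewrite S_INR. field. auto. }
  assert (E : csum g (S n) = g O + csum (fun l => g (S l)) n) by apply csum_S_l.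
  simpl in E. 
  assert (g n = g O).
  { unfold g. simpl. replace (2 * PI * INR n / INR n + b) with (b + 2*PI) by (field; auto).
    rewrite Hp. f_equal. field. auto. }
  change (csum (fun l => f (2 * PI * INR l / INR n + b)) n) with (csum g n). lra.
Qed.

Lemma Ssum_shiftk n f b k : (0 < n)%nat -> (forall x, f (x + 2*PI) = f x) ->
  Ssum n f (b - 2*PI*INR k/INR n) = Ssum n f b.
Proof.
  intros Hn Hp. assert (Hn' : INR n <> 0) by (apply not_0_INR; lia).
  induction k.
  - f_equal. simpl. field. auto.
  - rewrite <- IHk. rewrite <- (Ssum_shift1 n f (b - 2 * PI * INR (S k) / INR n)) by auto.
    f_equal. rewrite S_INR. field. auto.
Qed.

Lemma Ssum_odd n f b : (0 < n)%nat -> (forall x, f (x + 2*PI) = f x) -> (forall x, f (-x) = - f x) ->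
  Ssum n f b = - Ssum n f (2*PI/INR n - b).
Proof.
  intros Hn Hp Ho. assert (Hn' : INR n <> 0) by (apply not_0_INR; lia).
  unfold Ssum. rewrite <- csum_rev. rewrite <- csum_opp.
  apply csum_ext. intros l Hl.
  rewrite minus_INR by lia. rewrite minus_INR by lia. simpl INR.
  replace (2 * PI * (INR n - 1 - INR l) / INR n + b) with
      (- (2 * PI * INR l / INR n + (2 * PI / INR n - b)) + 2*PI) by (field; auto).
  rewrite Hp, Ho. reflexivity.
Qed.

Lemma Ssum_odd_zero0 n f : (0 < n)%nat -> (forall x, f (x + 2*PI) = f x) -> (forall x, f (-x) = - f x) ->
  Ssum n f 0 = 0.
Proof.
  intros Hn Hp Ho. assert (Hn' : INR n <> 0) by (apply not_0_INR; lia).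
  pose proof (Ssum_odd n f 0 Hn Hp Ho) as E.
  replace (2 * PI / INR n - 0) with (0 + 2*PI/INR n) in E by ring.
  rewrite Ssum_shift1 in E by auto. lra.
Qed.

Lemma Ssum_odd_zero1 n f : (0 < n)%nat -> (forall x, f (x + 2*PI) = f x) -> (forall x, f (-x) = - f x) ->
  Ssum n f (PI/INR n) = 0.
Proof.
  intros Hn Hp Ho. assert (Hn' : INR n <> 0) by (apply not_0_INR; lia).
  pose proof (Ssum_odd n f (PI/INR n) Hn Hp Ho) as E.
  replace (2 * PI / INR n - PI/INR n) with (PI/INR n) in E by (field; auto). lra.
Qed.

Lemma cos_lt_1_gen x : 0 < x < 2*PI -> cos x < 1.
Proof.
  intros [H1 H2].
  replace x with (2 * (x/2)) by field. rewrite cos_2a_sin.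
  assert (0 < sin (x/2)) by (apply sin_gt_0; lra).
  nra.
Qed.

Lemma Ssum_lin n f g A B b : Ssum n (fun x => A * f x + B * g x) b = A * Ssum n f b + B * Ssum n g b.
Proof. unfold Ssum. rewrite csum_plus, csum_scal, csum_scal. reflexivity. Qed.

Lemma Ssum_cos_sin_zero n b : (2 <= n)%nat -> Ssum n cos b = 0 /\ Ssum n sin b = 0.
Proof.
  intros Hn. assert (Hn0 : (0 < n)%nat) by lia.
  assert (Hn' : INR n <> 0) by (apply not_0_INR; lia).
  set (c := 2*PI/INR n).
  assert (Pc : forall x, cos (x + 2*PI) = cos x) by (intros; rewrite cos_plus, cos_2PI, sin_2PI; ring).
  assert (Ps : forall x, sin (x + 2*PI) = sin x) by (intros; rewrite sin_plus, cos_2PI, sin_2PI; ring).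
  assert (E1 : Ssum n cos (b + c) = cos c * Ssum n cos b - sin c * Ssum n sin b).
  { unfold Ssum. rewrite <- csum_scal, <- csum_scal, <- csum_minus. apply csum_ext; intros.
    rewrite <- Rplus_assoc, cos_plus. ring. }
  assert (E2 : Ssum n sin (b + c) = sin c * Ssum n cos b + cos c * Ssum n sin b).
  { unfold Ssum. rewrite <- csum_scal, <- csum_scal, <- csum_plus. apply csum_ext; intros.
    rewrite <- Rplus_assoc, sin_plus. ring. }
  unfold c in E1, E2. rewrite Ssum_shift1 in E1, E2 by auto. fold c in E1, E2.
  assert (Hc : cos c < 1).
  { apply cos_lt_1_gen. unfold c. pose proof PI_RGT_0.
    assert (2 <= INR n) by (replace 2 with (INR 2) by (simpl; ring); apply le_INR; auto).
    split. apply Rdiv_lt_0_compat; lra.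
    apply Rmult_lt_reg_r with (INR n); [lra|]. unfold Rdiv. rewrite Rmult_assoc, Rinv_l by auto. nra. }
  assert (Hs2 : sin c ^ 2 + cos c ^ 2 = 1) by (pose proof (sin2_cos2 c); unfold Rsqr in *; nra).
  set (X := Ssum n cos b) in *. set (Y := Ssum n sin b) in *.
  assert (A1 : X*(1-cos c) = - sin c * Y) by lra.
  assert (A2 : Y*(1-cos c) = sin c * X) by lra.
  assert (HX : X * ((1 - cos c)^2 + sin c ^2) = 0).
  { replace (X * ((1 - cos c)^2 + sin c ^2)) with ((X*(1-cos c))*(1-cos c) + sin c*(sin c*X)) by ring.
    rewrite A1, <- A2. ring. }
  assert (HY : Y * ((1 - cos c)^2 + sin c ^2) = 0).
  { replace (Y * ((1 - cos c)^2 + sin c ^2)) with (sin c*(X*(1-cos c)) + sin c*(sin c*Y)) by (rewrite <- A2 in *; ring_simplify; nra).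
    rewrite A1. ring. }
  assert (0 < (1 - cos c)^2 + sin c ^2) by nra.
  split.
  - destruct (Rmult_integral _ _ HX); auto; lra.
  - destruct (Rmult_integral _ _ HY); auto; lra.
Qed.

Definition rho (n : nat) (r : R) (k : nat) : R :=
  if Nat.eqb k 0 then 0 else if Nat.leb k n then r else 1.
Definition alpha (n : nat) (k : nat) : R :=
  if Nat.eqb k 0 then 0 else if Nat.leb k n then 2*PI*INR (k-1)/INR n + PI/INR n
  else 2*PI*INR (k-1-n)/INR n.

Lemma config_eq n r k : two_ngon_config n r 1 k = (rho n r k * cos (alpha n k), rho n r k * sin (alpha n k)).
Proof.
  unfold two_ngon_config, rho, alpha.
  destruct (Nat.eqb k 0); [unfold RtoC; f_equal; ring|].
  destruct (Nat.leb k n); reflexivity.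
Qed.

Lemma rot_pt p a t : Cmult (p * cos a, p * sin a) (cos t, sin t) = (p * cos (a + t), p * sin (a + t)).
Proof. unfold Cmult; simpl. rewrite cos_plus, sin_plus. f_equal; ring. Qed.

Lemma motion_eq n r k t : rel_eq_motion (two_ngon_config n r 1) k t =
   (rho n r k * cos (alpha n k + t), rho n r k * sin (alpha n k + t)).
Proof. unfold rel_eq_motion. rewrite config_eq. apply rot_pt. Qed.

Lemma term_rot K p a q b :
  Cmult (RtoC (K / Cmod (Cminus (p*cos a, p*sin a) (q*cos b, q*sin b)) ^ 3))
        (Cminus (p*cos a, p*sin a) (q*cos b, q*sin b))
  = Cmult (cos b, sin b) (K * ((p*cos (a-b) - q) / sqrt (p^2 + q^2 - 2*p*q*cos (a-b)) ^ 3),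
                          K * ((p*sin (a-b)) / sqrt (p^2 + q^2 - 2*p*q*cos (a-b)) ^ 3)).
Proof.
  assert (Hm : Cmod (Cminus (p*cos a, p*sin a) (q*cos b, q*sin b)) = sqrt (p^2 + q^2 - 2*p*q*cos (a-b))).
  { unfold Cmod, Cminus, Cplus, Copp; simpl. f_equal. rewrite cos_minus.
    pose proof (sin2_cos2 a); pose proof (sin2_cos2 b). unfold Rsqr in *. nra. }
  rewrite Hm. set (V := / sqrt (p ^ 2 + q ^ 2 - 2 * p * q * cos (a - b)) ^ 3).
  unfold Rdiv. fold V. unfold Cmult, Cminus, Cplus, Copp, RtoC; simpl.
  rewrite cos_minus, sin_minus.
  pose proof (sin2_cos2 b). unfold Rsqr in *.
  f_equal.
  - transitivity (K * V * (p * cos a * (sin b * sin b + cos b * cos b) - q * cos b)).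
    + rewrite H. ring.
    + ring.
  - transitivity (K * V * (p * sin a * (sin b * sin b + cos b * cos b) - q * sin b)).
    + rewrite H. ring.
    + ring.
Qed.

Definition Xf n r (mu : nat -> R) i j :=
  mu i * mu j * ((rho n r j * cos (alpha n j - alpha n i) - rho n r i) /
     sqrt (rho n r j ^2 + rho n r i ^2 - 2 * rho n r j * rho n r i * cos (alpha n j - alpha n i)) ^3).
Definition Yf n r (mu : nat -> R) i j :=
  mu i * mu j * ((rho n r j * sin (alpha n j - alpha n i)) /
     sqrt (rho n r j ^2 + rho n r i ^2 - 2 * rho n r j * rho n r i * cos (alpha n j - alpha n i)) ^3).

Lemma rhs_eq n r mu t i :
  newton_rhs (1 + 2*n) mu (fun j => rel_eq_motion (two_ngon_config n r 1) j t) i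
  = Cmult (cos (alpha n i + t), sin (alpha n i + t))
          (csum (Xf n r mu i) (S (2*n)), csum (Yf n r mu i) (S (2*n))).
Proof.
  unfold newton_rhs. replace (1 + 2*n - 1)%nat with (2*n)%nat by lia.
  rewrite (sum_n_ext _ (fun j => Cmult (cos (alpha n i + t), sin (alpha n i + t)) (Xf n r mu i j, Yf n r mu i j))).
  - rewrite sum_n_C. unfold Cmult; cbn [fst snd].
    f_equal.
    + rewrite csum_minus, csum_scal, csum_scal. reflexivity.
    + rewrite csum_plus, csum_scal, csum_scal. reflexivity.
  - intros j. destruct (Nat.eqb j i) eqn:E.
    + apply Nat.eqb_eq in E. subst j. unfold Xf, Yf. rewrite Rminus_diag, cos_0, sin_0.
      unfold Cmult, RtoC; simpl. f_equal; unfold Rdiv; ring.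
    + rewrite !motion_eq. rewrite term_rot.
      replace (alpha n j + t - (alpha n i + t)) with (alpha n j - alpha n i) by ring.
      reflexivity.
Qed.

Lemma lhs_eq n r mu t i a :
  a = Cmult (two_ngon_config n r 1 i) (- cos t, - sin t) ->
  Cmult (RtoC (mu i)) a = Cmult (cos (alpha n i + t), sin (alpha n i + t)) (- mu i * rho n r i, 0).
Proof.
  intros ->. rewrite config_eq. unfold Cmult, RtoC; simpl. rewrite cos_plus, sin_plus. f_equal; ring.
Qed.

Lemma deriv_rot (X : C) (t : R) (phase : R) :
  is_derive (fun s : R => Cmult X (cos (s + phase), sin (s + phase))) t
            (Cmult X (- sin (t + phase), cos (t + phase))).
Proof.
  destruct X as [x1 x2].
  apply is_derive_ext with
    (f := fun s : R => plus (scal (cos (s + phase)) ((x1, x2) : C)) (scal (sin (s + phase)) ((- x2, x1) : C))).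
  { intros s. unfold Cmult; simpl. unfold plus, scal; simpl.
    unfold prod_plus, prod_scal; simpl. unfold plus, scal; simpl. unfold mult; simpl. f_equal; ring. }
  replace (Cmult (x1, x2) (- sin (t + phase), cos (t + phase))) with
    (plus (scal (- sin (t + phase)) ((x1, x2) : C)) (scal (cos (t + phase)) ((- x2, x1) : C))).
  2:{ unfold Cmult; simpl. unfold plus, scal; simpl.
    unfold prod_plus, prod_scal; simpl. unfold plus, scal; simpl. unfold mult; simpl. f_equal; ring. }
  apply (is_derive_plus (V := C_R_NormedModule)).
  - apply (@is_derive_scal_l R_AbsRing C_R_NormedModule (fun s => cos (s+phase)) t (- sin (t+phase)) ((x1,x2):C)).
    auto_derive; [trivial| ring].
  - apply (@is_derive_scal_l R_AbsRing C_R_NormedModule (fun s => sin (s+phase)) t (cos (t+phase)) ((-x2,x1):C)).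
    auto_derive; [trivial| ring].
Qed.

Definition Gc (c : R) : R := (1 - c) / sqrt (2 - 2*c) ^ 3.
Definition sS n := Ssum n (fun x => Gc (cos x)) 0.
Definition tT n := Ssum n (fun x => Gc (cos x)) (PI/INR n).
Definition Uu n r := Ssum n (fun x => (r - cos x) / sqrt (1 + r^2 - 2*r*cos x)^3) (PI/INR n).
Definition Ww n r := Ssum n (fun x => (1 - r*cos x) / sqrt (1 + r^2 - 2*r*cos x)^3) (PI/INR n).

Lemma cos_per x : cos (x + 2*PI) = cos x.
Proof. rewrite cos_plus, cos_2PI, sin_2PI; ring. Qed.
Lemma sin_per x : sin (x + 2*PI) = sin x.
Proof. rewrite sin_plus, cos_2PI, sin_2PI; ring. Qed.

Lemma Ssum_cosk n g b k : (0 < n)%nat ->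
  Ssum n (fun x => g (cos x)) (b - 2*PI*INR k/INR n) = Ssum n (fun x => g (cos x)) b.
Proof. intros Hn. apply Ssum_shiftk; auto. intros; rewrite cos_per; auto. Qed.

Lemma Ssum_sink n g b k : (0 < n)%nat ->
  Ssum n (fun x => sin x * g (cos x)) (b - 2*PI*INR k/INR n) = Ssum n (fun x => sin x * g (cos x)) b.
Proof. intros Hn. apply Ssum_shiftk; auto. intros; rewrite cos_per, sin_per; auto. Qed.

Lemma Ssum_sin0 n g : (0 < n)%nat -> Ssum n (fun x => sin x * g (cos x)) 0 = 0.
Proof.
  intros Hn. apply Ssum_odd_zero0; auto.
  - intros; rewrite cos_per, sin_per; auto.
  - intros; rewrite cos_neg, sin_neg; ring.
Qed.

Lemma Ssum_sin1 n g : (0 < n)%nat -> Ssum n (fun x => sin x * g (cos x)) (PI/INR n) = 0.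
Proof.
  intros Hn. apply Ssum_odd_zero1; auto.
  - intros; rewrite cos_per, sin_per; auto.
  - intros; rewrite cos_neg, sin_neg; ring.
Qed.

Lemma rho0 n r : rho n r 0 = 0. Proof. reflexivity. Qed.
Lemma alpha0 n : alpha n 0 = 0. Proof. reflexivity. Qed.
Lemma rho1 n r l : (l < n)%nat -> rho n r (1 + l) = r.
Proof. intros H. unfold rho. destruct (Nat.eqb_spec (1+l) 0); [lia|]. destruct (Nat.leb_spec (1+l) n); [reflexivity|lia]. Qed.
Lemma alpha1 n l : (l < n)%nat -> alpha n (1 + l) = 2*PI*INR l/INR n + PI/INR n.
Proof. intros H. unfold alpha. destruct (Nat.eqb_spec (1+l) 0); [lia|]. destruct (Nat.leb_spec (1+l) n); [|lia].
  replace (1 + l - 1)%nat with l by lia. reflexivity. Qed.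
Lemma rho2 n r l : rho n r (1 + n + l) = 1.
Proof. unfold rho. destruct (Nat.eqb_spec (1+n+l) 0); [lia|]. destruct (Nat.leb_spec (1+n+l) n); [lia|reflexivity]. Qed.
Lemma alpha2 n l : alpha n (1 + n + l) = 2*PI*INR l/INR n.
Proof. unfold alpha. destruct (Nat.eqb_spec (1+n+l) 0); [lia|]. destruct (Nat.leb_spec (1+n+l) n); [lia|].
  replace (1 + n + l - 1 - n)%nat with l by lia. reflexivity. Qed.
Lemma mass0 n m0 m1 m2 : mass_of_system n (m0, m1, m2) 0 = m0. Proof. reflexivity. Qed.
Lemma mass1 n m0 m1 m2 l : (l < n)%nat -> mass_of_system n (m0, m1, m2) (1 + l) = m1.
Proof. intros H. unfold mass_of_system. destruct (Nat.eqb_spec (1+l) 0); [lia|]. destruct (Nat.leb_spec (1+l) n); [reflexivity|lia]. Qed.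
Lemma mass2 n m0 m1 m2 l : mass_of_system n (m0, m1, m2) (1 + n + l) = m2.
Proof. unfold mass_of_system. destruct (Nat.eqb_spec (1+n+l) 0); [lia|]. destruct (Nat.leb_spec (1+n+l) n); [lia|reflexivity]. Qed.

Lemma csum_3 f n : csum f (S (2*n)) = f O + csum (fun l => f (1 + l)%nat) n + csum (fun l => f (1 + n + l)%nat) n.
Proof.
  replace (S (2*n)) with ((1 + n) + n)%nat by lia. rewrite csum_split, csum_split. simpl. ring.
Qed.

Lemma scale1 r x : 0 < r -> (r * cos x - r) / sqrt (r^2 + r^2 - 2*r*r*cos x)^3 = - / r^2 * Gc (cos x).
Proof.
  intros Hr. unfold Gc.
  assert (0 <= 2 - 2 * cos x) by (pose proof (COS_bound x); lra).
  replace (r^2 + r^2 - 2*r*r*cos x) with (r^2 * (2 - 2*cos x)) by ring.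
  rewrite sqrt_mult by (try apply pow2_ge_0; auto). rewrite sqrt_pow2 by lra.
  unfold Rdiv. rewrite Rpow_mult_distr, Rinv_mult.
  set (V := / sqrt (2 - 2 * cos x) ^ 3).
  field. lra.
Qed.

Lemma body_ring1 n r m0 m1 m2 k : (2 <= n)%nat -> (k < n)%nat -> 0 < r ->
  csum (Xf n r (mass_of_system n (m0,m1,m2)) (1+k)) (S (2*n))
    = - m1*m0/r^2 - m1*m1*sS n/r^2 - m1*m2*Uu n r
  /\ csum (Yf n r (mass_of_system n (m0,m1,m2)) (1+k)) (S (2*n)) = 0.
Proof.
  intros Hn Hk Hr. assert (Hn0 : (0 < n)%nat) by lia.
  assert (HnR : INR n <> 0) by (apply not_0_INR; lia).
  split; rewrite csum_3.
  - assert (E0 : Xf n r (mass_of_system n (m0, m1, m2)) (1 + k) 0 = - m1*m0/r^2).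
    { unfold Xf. rewrite rho0, alpha0, rho1, alpha1, mass0, mass1 by auto.
      replace (0 ^ 2 + r ^ 2 - 2 * 0 * r * cos (0 - (2 * PI * INR k / INR n + PI / INR n))) with (r^2) by ring.
      rewrite sqrt_pow2 by lra. field. lra. }
    assert (E1 : csum (fun l => Xf n r (mass_of_system n (m0, m1, m2)) (1 + k) (1 + l)) n
                 = m1*m1*(- (/ r^2)) * sS n).
    { transitivity (csum (fun l => m1*m1*(- (/ r^2)) * Gc (cos (2*PI*INR l/INR n + (0 - 2*PI*INR k/INR n)))) n).
      - apply csum_ext. intros l Hl. unfold Xf. rewrite rho1, alpha1, rho1, alpha1, mass1, mass1 by auto.
        replace (2 * PI * INR l / INR n + PI / INR n - (2 * PI * INR k / INR n + PI / INR n))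
          with (2*PI*INR l/INR n + (0 - 2*PI*INR k/INR n)) by ring.
        rewrite scale1 by auto. ring.
      - rewrite csum_scal. f_equal. unfold sS. 
        change (csum (fun l => Gc (cos (2 * PI * INR l / INR n + (0 - 2 * PI * INR k / INR n)))) n)
          with (Ssum n (fun x => Gc (cos x)) (0 - 2 * PI * INR k / INR n)).
        apply Ssum_cosk; auto. }
    assert (E2 : csum (fun l => Xf n r (mass_of_system n (m0, m1, m2)) (1 + k) (1 + n + l)) n
                 = - m1*m2 * Uu n r).
    { transitivity (csum (fun l => - m1*m2 * ((fun c => (r - c) / sqrt (1 + r^2 - 2*r*c)^3)
                      (cos (2*PI*INR l/INR n + (PI/INR n - 2*PI*INR (S k)/INR n))))) n).
      - apply csum_ext. intros l Hl. unfold Xf. rewrite rho1, alpha1, rho2, alpha2, mass1, mass2 by auto.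
        replace (2 * PI * INR l / INR n - (2 * PI * INR k / INR n + PI / INR n))
          with (2*PI*INR l/INR n + (PI/INR n - 2*PI*INR (S k)/INR n)) by (rewrite S_INR; field; auto).
        set (y := 2 * PI * INR l / INR n + (PI / INR n - 2 * PI * INR (S k) / INR n)).
        replace (1 ^ 2 + r ^ 2 - 2 * 1 * r * cos y) with (1 + r^2 - 2*r*cos y) by ring.
        unfold Rdiv. ring.
      - rewrite csum_scal. f_equal. unfold Uu.
        exact (Ssum_cosk n (fun c => (r - c) / sqrt (1 + r ^ 2 - 2 * r * c) ^ 3) (PI/INR n) (S k) Hn0). }
    rewrite E0, E1, E2. field. lra.
  - assert (E0 : Yf n r (mass_of_system n (m0, m1, m2)) (1 + k) 0 = 0).
    { unfold Yf. rewrite rho0. unfold Rdiv. ring. }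
    assert (E1 : csum (fun l => Yf n r (mass_of_system n (m0, m1, m2)) (1 + k) (1 + l)) n = 0).
    { transitivity (csum (fun l => (fun x => sin x * (fun c => m1*m1*(r / sqrt (r^2 + r^2 - 2*r*r*c)^3)) (cos x))
                          (2*PI*INR l/INR n + (0 - 2*PI*INR k/INR n))) n).
      - apply csum_ext. intros l Hl. unfold Yf. rewrite rho1, alpha1, rho1, alpha1, mass1, mass1 by auto.
        replace (2 * PI * INR l / INR n + PI / INR n - (2 * PI * INR k / INR n + PI / INR n))
          with (2*PI*INR l/INR n + (0 - 2*PI*INR k/INR n)) by ring.
        unfold Rdiv. ring.
      - change (Ssum n (fun x => sin x * (fun c => m1*m1*(r / sqrt (r^2 + r^2 - 2*r*r*c)^3)) (cos x))
                 (0 - 2*PI*INR k/INR n) = 0).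
        rewrite Ssum_sink by auto. exact (Ssum_sin0 n (fun c => m1*m1*(r / sqrt (r^2 + r^2 - 2*r*r*c)^3)) Hn0). }
    assert (E2 : csum (fun l => Yf n r (mass_of_system n (m0, m1, m2)) (1 + k) (1 + n + l)) n = 0).
    { transitivity (csum (fun l => (fun x => sin x * (fun c => m1*m2*(1 / sqrt (1^2 + r^2 - 2*1*r*c)^3)) (cos x))
                          (2*PI*INR l/INR n + (PI/INR n - 2*PI*INR (S k)/INR n))) n).
      - apply csum_ext. intros l Hl. unfold Yf. rewrite rho1, alpha1, rho2, alpha2, mass1, mass2 by auto.
        replace (2 * PI * INR l / INR n - (2 * PI * INR k / INR n + PI / INR n))
          with (2*PI*INR l/INR n + (PI/INR n - 2*PI*INR (S k)/INR n)) by (rewrite S_INR; field; auto).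
        unfold Rdiv. ring.
      - change (Ssum n (fun x => sin x * (fun c => m1*m2*(1 / sqrt (1^2 + r^2 - 2*1*r*c)^3)) (cos x))
                 (PI/INR n - 2*PI*INR (S k)/INR n) = 0).
        rewrite Ssum_sink by auto. exact (Ssum_sin1 n (fun c => m1*m2*(1 / sqrt (1^2 + r^2 - 2*1*r*c)^3)) Hn0). }
    rewrite E0, E1, E2. ring.
Qed.

Lemma body_ring2 n r m0 m1 m2 k : (2 <= n)%nat -> (k < n)%nat -> 0 < r ->
  csum (Xf n r (mass_of_system n (m0,m1,m2)) (1+n+k)) (S (2*n))
    = - m2*m0 - m2*m1*Ww n r - m2*m2*sS n
  /\ csum (Yf n r (mass_of_system n (m0,m1,m2)) (1+n+k)) (S (2*n)) = 0.
Proof.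
  intros Hn Hk Hr. assert (Hn0 : (0 < n)%nat) by lia.
  assert (HnR : INR n <> 0) by (apply not_0_INR; lia).
  split; rewrite csum_3.
  - assert (E0 : Xf n r (mass_of_system n (m0, m1, m2)) (1 + n + k) 0 = - m2*m0).
    { unfold Xf. rewrite rho0, alpha0, rho2, alpha2, mass0, mass2 by auto.
      replace (0 ^ 2 + 1 ^ 2 - 2 * 0 * 1 * cos (0 - (2 * PI * INR k / INR n))) with 1 by ring.
      rewrite sqrt_1. field. }
    assert (E1 : csum (fun l => Xf n r (mass_of_system n (m0, m1, m2)) (1 + n + k) (1 + l)) n
                 = - m2*m1 * Ww n r).
    { transitivity (csum (fun l => - m2*m1 * ((fun c => (1 - r*c) / sqrt (1 + r^2 - 2*r*c)^3)
                      (cos (2*PI*INR l/INR n + (PI/INR n - 2*PI*INR k/INR n))))) n).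
      - apply csum_ext. intros l Hl. unfold Xf. rewrite rho1, alpha1, rho2, alpha2, mass1, mass2 by auto.
        replace (2 * PI * INR l / INR n + PI / INR n - 2 * PI * INR k / INR n)
          with (2*PI*INR l/INR n + (PI/INR n - 2*PI*INR k/INR n)) by ring.
        set (y := 2 * PI * INR l / INR n + (PI / INR n - 2 * PI * INR k / INR n)).
        replace (r ^ 2 + 1 ^ 2 - 2 * r * 1 * cos y) with (1 + r^2 - 2*r*cos y) by ring.
        unfold Rdiv. ring.
      - rewrite csum_scal. f_equal. unfold Ww.
        exact (Ssum_cosk n (fun c => (1 - r*c) / sqrt (1 + r ^ 2 - 2 * r * c) ^ 3) (PI/INR n) k Hn0). }
    assert (E2 : csum (fun l => Xf n r (mass_of_system n (m0, m1, m2)) (1 + n + k) (1 + n + l)) n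
                 = m2*m2*(- (/ 1^2)) * sS n).
    { transitivity (csum (fun l => m2*m2*(- (/ 1^2)) * Gc (cos (2*PI*INR l/INR n + (0 - 2*PI*INR k/INR n)))) n).
      - apply csum_ext. intros l Hl. unfold Xf. rewrite rho2, alpha2, rho2, alpha2, mass2, mass2 by auto.
        replace (2 * PI * INR l / INR n - 2 * PI * INR k / INR n)
          with (2*PI*INR l/INR n + (0 - 2*PI*INR k/INR n)) by ring.
        rewrite scale1 by lra. ring.
      - rewrite csum_scal. f_equal. unfold sS. 
        exact (Ssum_cosk n Gc 0 k Hn0). }
    rewrite E0, E1, E2. field.
  - assert (E0 : Yf n r (mass_of_system n (m0, m1, m2)) (1 + n + k) 0 = 0).
    { unfold Yf. rewrite rho0. unfold Rdiv. ring. }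
    assert (E1 : csum (fun l => Yf n r (mass_of_system n (m0, m1, m2)) (1 + n + k) (1 + l)) n = 0).
    { transitivity (csum (fun l => (fun x => sin x * (fun c => m2*m1*(r / sqrt (r^2 + 1^2 - 2*r*1*c)^3)) (cos x))
                          (2*PI*INR l/INR n + (PI/INR n - 2*PI*INR k/INR n))) n).
      - apply csum_ext. intros l Hl. unfold Yf. rewrite rho1, alpha1, rho2, alpha2, mass1, mass2 by auto.
        replace (2 * PI * INR l / INR n + PI / INR n - 2 * PI * INR k / INR n)
          with (2*PI*INR l/INR n + (PI/INR n - 2*PI*INR k/INR n)) by ring.
        unfold Rdiv. ring.
      - change (Ssum n (fun x => sin x * (fun c => m2*m1*(r / sqrt (r^2 + 1^2 - 2*r*1*c)^3)) (cos x))
                 (PI/INR n - 2*PI*INR k/INR n) = 0).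
        rewrite Ssum_sink by auto. exact (Ssum_sin1 n (fun c => m2*m1*(r / sqrt (r^2 + 1^2 - 2*r*1*c)^3)) Hn0). }
    assert (E2 : csum (fun l => Yf n r (mass_of_system n (m0, m1, m2)) (1 + n + k) (1 + n + l)) n = 0).
    { transitivity (csum (fun l => (fun x => sin x * (fun c => m2*m2*(1 / sqrt (1^2 + 1^2 - 2*1*1*c)^3)) (cos x))
                          (2*PI*INR l/INR n + (0 - 2*PI*INR k/INR n))) n).
      - apply csum_ext. intros l Hl. unfold Yf. rewrite rho2, alpha2, rho2, alpha2, mass2, mass2 by auto.
        replace (2 * PI * INR l / INR n - 2 * PI * INR k / INR n)
          with (2*PI*INR l/INR n + (0 - 2*PI*INR k/INR n)) by ring.
        unfold Rdiv. ring.
      - change (Ssum n (fun x => sin x * (fun c => m2*m2*(1 / sqrt (1^2 + 1^2 - 2*1*1*c)^3)) (cos x))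
                 (0 - 2*PI*INR k/INR n) = 0).
        rewrite Ssum_sink by auto. exact (Ssum_sin0 n (fun c => m2*m2*(1 / sqrt (1^2 + 1^2 - 2*1*1*c)^3)) Hn0). }
    rewrite E0, E1, E2. ring.
Qed.

Lemma body_center n r m0 m1 m2 : (2 <= n)%nat -> 0 < r ->
  csum (Xf n r (mass_of_system n (m0,m1,m2)) 0) (S (2*n)) = 0
  /\ csum (Yf n r (mass_of_system n (m0,m1,m2)) 0) (S (2*n)) = 0.
Proof.
  intros Hn Hr. assert (Hn0 : (0 < n)%nat) by lia.
  assert (HnR : INR n <> 0) by (apply not_0_INR; lia).
  destruct (Ssum_cos_sin_zero n (PI/INR n) Hn) as [C1 S1].
  destruct (Ssum_cos_sin_zero n 0 Hn) as [C2 S2].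
  split; rewrite csum_3.
  - assert (E0 : Xf n r (mass_of_system n (m0, m1, m2)) 0 0 = 0).
    { unfold Xf. rewrite rho0. unfold Rdiv. ring. }
    assert (E1 : csum (fun l => Xf n r (mass_of_system n (m0, m1, m2)) 0 (1 + l)) n = 0).
    { transitivity (csum (fun l => m0*m1*(r / sqrt (r^2)^3) * cos (2*PI*INR l/INR n + PI/INR n)) n).
      - apply csum_ext. intros l Hl. unfold Xf. rewrite rho1, alpha1, rho0, alpha0, mass1, mass0 by auto.
        rewrite !Rminus_0_r. replace (r ^ 2 + 0 ^ 2 - 2 * r * 0 * cos (2 * PI * INR l / INR n + PI / INR n)) with (r^2) by ring.
        unfold Rdiv. ring.
      - rewrite csum_scal. unfold Ssum in C1. rewrite C1. ring. }
    assert (E2 : csum (fun l => Xf n r (mass_of_system n (m0, m1, m2)) 0 (1 + n + l)) n = 0).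
    { transitivity (csum (fun l => m0*m2*(1 / sqrt (1^2)^3) * cos (2*PI*INR l/INR n + 0)) n).
      - apply csum_ext. intros l Hl. unfold Xf. rewrite rho2, alpha2, rho0, alpha0, mass2, mass0 by auto.
        rewrite !Rminus_0_r, !Rplus_0_r. replace (1 ^ 2 + 0 ^ 2 - 2 * 1 * 0 * cos (2 * PI * INR l / INR n)) with (1^2) by ring.
        unfold Rdiv. ring.
      - rewrite csum_scal. unfold Ssum in C2. rewrite C2. ring. }
    rewrite E0, E1, E2. ring.
  - assert (E0 : Yf n r (mass_of_system n (m0, m1, m2)) 0 0 = 0).
    { unfold Yf. rewrite rho0. unfold Rdiv. ring. }
    assert (E1 : csum (fun l => Yf n r (mass_of_system n (m0, m1, m2)) 0 (1 + l)) n = 0).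
    { transitivity (csum (fun l => m0*m1*(r / sqrt (r^2)^3) * sin (2*PI*INR l/INR n + PI/INR n)) n).
      - apply csum_ext. intros l Hl. unfold Yf. rewrite rho1, alpha1, rho0, alpha0, mass1, mass0 by auto.
        rewrite !Rminus_0_r. replace (r ^ 2 + 0 ^ 2 - 2 * r * 0 * cos (2 * PI * INR l / INR n + PI / INR n)) with (r^2) by ring.
        unfold Rdiv. ring.
      - rewrite csum_scal. unfold Ssum in S1. rewrite S1. ring. }
    assert (E2 : csum (fun l => Yf n r (mass_of_system n (m0, m1, m2)) 0 (1 + n + l)) n = 0).
    { transitivity (csum (fun l => m0*m2*(1 / sqrt (1^2)^3) * sin (2*PI*INR l/INR n + 0)) n).
      - apply csum_ext. intros l Hl. unfold Yf. rewrite rho2, alpha2, rho0, alpha0, mass2, mass0 by auto.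
        rewrite !Rminus_0_r, !Rplus_0_r. replace (1 ^ 2 + 0 ^ 2 - 2 * 1 * 0 * cos (2 * PI * INR l / INR n)) with (1^2) by ring.
        unfold Rdiv. ring.
      - rewrite csum_scal. unfold Ssum in S2. rewrite S2. ring. }
    rewrite E0, E1, E2. ring.
Qed.

Lemma solution_of_eqs n r m0 m1 m2 : (2 <= n)%nat -> 0 < r ->
  m0 + m1 * sS n + m2 * (r^2 * Uu n r) = r^3 ->
  m0 + m1 * Ww n r + m2 * sS n = 1 ->
  is_nbody_solution (1 + 2*n) (mass_of_system n (m0,m1,m2)) (rel_eq_motion (two_ngon_config n r 1)).
Proof.
  intros Hn Hr E1 E2.
  set (x := two_ngon_config n r 1).
  exists (fun k t => Cmult (x k) (- sin t, cos t)), (fun k t => Cmult (x k) (- cos t, - sin t)).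
  intros i Hi t. split; [|split].
  - unfold rel_eq_motion.
    apply is_derive_ext with (f := fun s => Cmult (x i) (cos (s + 0), sin (s + 0))).
    { intros s; rewrite Rplus_0_r; reflexivity. }
    pose proof (deriv_rot (x i) t 0) as D. rewrite Rplus_0_r in D. exact D.
  - apply is_derive_ext with (f := fun s => Cmult (x i) (cos (s + PI/2), sin (s + PI/2))).
    { intros s. rewrite cos_plus, sin_plus, cos_PI2, sin_PI2. f_equal. f_equal; ring. }
    pose proof (deriv_rot (x i) t (PI/2)) as D.
    rewrite cos_plus, sin_plus, cos_PI2, sin_PI2 in D.
    replace (- (sin t * 0 + cos t * 1), cos t * 0 - sin t * 1) with (- cos t, - sin t) in D by (f_equal; ring).
    exact D.
  - unfold x. rewrite (lhs_eq n r _ t i _ eq_refl). rewrite rhs_eq.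
    f_equal.
    assert (Hcase : (i = 0 \/ (exists k, k < n /\ i = 1 + k) \/ (exists k, k < n /\ i = 1 + n + k))%nat).
    { destruct (Nat.eq_dec i 0); [left; auto|right].
      destruct (le_lt_dec i n); [left; exists (i - 1)%nat; split; lia | right; exists (i - 1 - n)%nat; split; lia]. }
    destruct Hcase as [-> | [[k [Hk ->]] | [k [Hk ->]]]].
    + destruct (body_center n r m0 m1 m2 Hn Hr) as [X Y]. rewrite X, Y. rewrite rho0. f_equal; ring.
    + destruct (body_ring1 n r m0 m1 m2 k Hn Hk Hr) as [X Y]. rewrite X, Y. rewrite rho1 by auto.
      rewrite mass1 by auto. f_equal.
      replace m0 with (r^3 - m1 * sS n - m2 * (r^2 * Uu n r)) by lra. field. lra.
    + destruct (body_ring2 n r m0 m1 m2 k Hn Hk Hr) as [X Y]. rewrite X, Y. rewrite rho2.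
      rewrite mass2. f_equal.
      replace m0 with (1 - m1 * Ww n r - m2 * sS n) by lra. ring.
Qed.

Lemma moment_zero n r m0 m1 m2 : (2 <= n)%nat ->
  mass_moment (1 + 2*n) (mass_of_system n (m0,m1,m2)) (two_ngon_config n r 1) = RtoC 0.
Proof.
  intros Hn. assert (HnR : INR n <> 0) by (apply not_0_INR; lia).
  destruct (Ssum_cos_sin_zero n (PI/INR n) Hn) as [C1 S1].
  destruct (Ssum_cos_sin_zero n 0 Hn) as [C2 S2].
  unfold Ssum in C1, S1, C2, S2.
  unfold mass_moment. replace (1 + 2*n - 1)%nat with (2*n)%nat by lia.
  rewrite sum_n_C. unfold RtoC. f_equal.
  - rewrite csum_3.
    rewrite (csum_ext (fun l => (fun j => fst (Cmult (RtoC (mass_of_system n (m0,m1,m2) j)) (two_ngon_config n r 1 j))) (1 + l)%nat) (fun l => m1 * r * cos (2*PI*INR l/INR n + PI/INR n))).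
    2:{ intros l Hl. cbv beta. rewrite config_eq, rho1, alpha1, mass1 by auto. unfold Cmult, RtoC; simpl. ring. }
    rewrite (csum_ext (fun l => (fun j => fst (Cmult (RtoC (mass_of_system n (m0,m1,m2) j)) (two_ngon_config n r 1 j))) (1 + n + l)%nat) (fun l => m2 * cos (2*PI*INR l/INR n + 0))).
    2:{ intros l Hl. cbv beta. rewrite config_eq, rho2, alpha2, mass2 by auto. unfold Cmult, RtoC; simpl. rewrite Rplus_0_r. ring. }
    rewrite csum_scal, csum_scal, C1, C2. cbv beta. rewrite config_eq, rho0. unfold Cmult, RtoC; simpl. ring.
  - rewrite csum_3.
    rewrite (csum_ext (fun l => (fun j => snd (Cmult (RtoC (mass_of_system n (m0,m1,m2) j)) (two_ngon_config n r 1 j))) (1 + l)%nat) (fun l => m1 * r * sin (2*PI*INR l/INR n + PI/INR n))).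
    2:{ intros l Hl. cbv beta. rewrite config_eq, rho1, alpha1, mass1 by auto. unfold Cmult, RtoC; simpl. ring. }
    rewrite (csum_ext (fun l => (fun j => snd (Cmult (RtoC (mass_of_system n (m0,m1,m2) j)) (two_ngon_config n r 1 j))) (1 + n + l)%nat) (fun l => m2 * sin (2*PI*INR l/INR n + 0))).
    2:{ intros l Hl. cbv beta. rewrite config_eq, rho2, alpha2, mass2 by auto. unfold Cmult, RtoC; simpl. rewrite Rplus_0_r. ring. }
    rewrite csum_scal, csum_scal, S1, S2. cbv beta. rewrite config_eq, rho0. unfold Cmult, RtoC; simpl. ring.
Qed.

Fixpoint harm (k : nat) : R := match k with O => 0 | S k' => harm k' + / INR (S k') end.
Fixpoint qharm (k : nat) : Q := match k with O => 0%Q | S k' => Qred (qharm k' + (1 # Pos.of_succ_nat k'))%Q end.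

Lemma qharm_ok k : Q2R (qharm k) = harm k.
Proof.
  induction k.
  - unfold Q2R; simpl; lra.
  - change (qharm (S k)) with (Qred (qharm k + (1 # Pos.of_succ_nat k))%Q).
    change (harm (S k)) with (harm k + / INR (S k)).
    rewrite (Qeq_eqR _ _ (Qred_correct _)), Q2R_plus, IHk. f_equal.
    unfold Q2R. rewrite INR_IZR_INZ, Nat2Z.inj_succ, <- Zpos_P_of_succ_nat. cbn [Qnum Qden]. field.
    apply not_0_IZR. discriminate.
Qed.

Lemma harm236_bounds : 6.0431 <= harm 236 <= 6.0432.
Proof.
  rewrite <- qharm_ok.
  assert (H1 : (60431 # 10000 <= qharm 236)%Q) by (apply Qle_bool_iff; vm_compute; reflexivity).
  assert (H2 : (qharm 236 <= 60432 # 10000)%Q) by (apply Qle_bool_iff; vm_compute; reflexivity).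
  apply Qle_Rle in H1, H2.
  assert (E1 : Q2R (60431 # 10000) = 6.0431) by (unfold Q2R; cbn [Qnum Qden]; lra).
  assert (E2 : Q2R (60432 # 10000) = 6.0432) by (unfold Q2R; cbn [Qnum Qden]; lra).
  lra.
Qed.

Lemma PI_bounds : 3.14159 <= PI <= 3.14160.
Proof.
  destruct (PI_2_3_7_ineq 2) as [H1 H2].
  unfold tg_alt, PI_2_3_7_tg, Ratan_seq in H1, H2.
  simpl in H1, H2.
  lra.
Qed.

Lemma sin_ub9 x : 0 <= x -> x <= 4 ->
  sin x <= x - x^3/6 + x^5/120 - x^7/5040 + x^9/362880.
Proof.
  intros H1 H2. destruct (pre_sin_bound x 1 H1 H2) as [_ H].
  unfold sin_approx, sin_term in H. cbn [sum_f_R0 Nat.mul Nat.add] in H.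
  replace (INR (fact 1)) with 1 in H by reflexivity.
  replace (INR (fact 3)) with 6 in H by (rewrite INR_IZR_INZ; reflexivity).
  replace (INR (fact 5)) with 120 in H by (rewrite INR_IZR_INZ; reflexivity).
  replace (INR (fact 7)) with 5040 in H by (rewrite INR_IZR_INZ; reflexivity).
  replace (INR (fact 9)) with 362880 in H by (rewrite INR_IZR_INZ; vm_compute; reflexivity).
  simpl pow in H |- *. lra.
Qed.

Lemma sin_lb3 x : 0 <= x -> x <= 4 -> x - x^3/6 <= sin x.
Proof.
  intros H1 H2. destruct (pre_sin_bound x 0 H1 H2) as [H _].
  unfold sin_approx, sin_term in H. cbn [sum_f_R0 Nat.mul Nat.add] in H.
  replace (INR (fact 1)) with 1 in H by reflexivity.
  replace (INR (fact 3)) with 6 in H by (rewrite INR_IZR_INZ; reflexivity).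
  simpl pow in H |- *. lra.
Qed.

Lemma sin_ub5 x : 0 <= x -> x <= 4 -> sin x <= x - x^3/6 + x^5/120.
Proof.
  intros H1 H2. destruct (pre_sin_bound x 0 H1 H2) as [_ H].
  unfold sin_approx, sin_term in H. cbn [sum_f_R0 Nat.mul Nat.add] in H.
  replace (INR (fact 1)) with 1 in H by reflexivity.
  replace (INR (fact 3)) with 6 in H by (rewrite INR_IZR_INZ; reflexivity).
  replace (INR (fact 5)) with 120 in H by (rewrite INR_IZR_INZ; reflexivity).
  simpl pow in H |- *. lra.
Qed.

Lemma sin_le_x' x : 0 <= x -> x <= 4 -> sin x <= x.
Proof.
  intros H1 H2. pose proof (sin_ub5 x H1 H2).
  assert (x^5/120 <= x^3/6).
  { assert (x^5 = x^3 * x^2) by ring. assert (0 <= x^3) by (apply pow_le; lra).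
    assert (x^2 <= 16) by nra. nra. }
  lra.
Qed.

Definition Tpoly (x : R) : R := /x + x/6 + 7*x^3/360 + 31*x^5/15120 + 127*x^7/604800.

Lemma csc_lb x : 0 < x -> x <= 1.6 -> Tpoly x <= / sin x.
Proof.
  intros H1 H2.
  assert (Hs : 0 < sin x) by (apply sin_gt_0; [lra| pose proof PI_bounds; lra]).
  pose proof (sin_ub9 x ltac:(lra) ltac:(lra)) as Hu.
  set (S9 := x - x^3/6 + x^5/120 - x^7/5040 + x^9/362880) in Hu.
  assert (HT : 0 < Tpoly x).
  { unfold Tpoly. assert (0 < /x) by (apply Rinv_0_lt_compat; lra).
    assert (0 < x^3) by (apply pow_lt; lra). assert (0 < x^5) by (apply pow_lt; lra).
    assert (0 < x^7) by (apply pow_lt; lra). lra. }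
  assert (Hp : Tpoly x * S9 <= 1).
  { set (y := x^2).
    assert (E : Tpoly x * S9 - 1 = y^5 * (-29/1360800 + 3193/2286144000 * y - 247/6858432000 * y^2 + 127/219469824000 * y^3)).
    { unfold Tpoly, S9, y. field. lra. }
    assert (Hy0 : 0 <= y) by (unfold y; nra). assert (Hy1 : y <= 2.56) by (unfold y; nra).
    assert (0 <= y^5) by (apply pow_le; lra).
    assert (-29/1360800 + 3193/2286144000 * y - 247/6858432000 * y^2 + 127/219469824000 * y^3 <= 0).
    { assert (y^3 <= 2.56 * y^2) by (simpl; nra). assert (0 <= y^2) by nra. nra. }
    nra. }
  apply (Rmult_le_reg_r (sin x)); auto. rewrite Rinv_l by lra. nra.
Qed.

Lemma csc_ub x : 0 < x -> x <= 1.6 -> / sin x <= / x + 1/2.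
Proof.
  intros H1 H2.
  assert (Hs : 0 < sin x) by (apply sin_gt_0; [lra| pose proof PI_bounds; lra]).
  pose proof (sin_lb3 x ltac:(lra) ltac:(lra)) as Hl.
  assert (1 <= (/x + 1/2) * sin x).
  { assert (0 < /x + 1/2) by (assert (0 < /x) by (apply Rinv_0_lt_compat; lra); lra).
    assert ((/x + 1/2) * (x - x^3/6) >= 1).
    { replace ((/x + 1/2) * (x - x^3/6)) with (1 + x * (6 - 2*x - x^2)/12) by (field; lra).
      assert (0 <= x * (6 - 2*x - x^2)) by (apply Rmult_le_pos; nra). lra. }
    nra. }
  apply (Rmult_le_reg_r (sin x)); auto. rewrite Rinv_l by lra. lra.
Qed.

Lemma Gc_eq c : c < 1 -> Gc c = / (2 * sqrt (2 - 2*c)).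
Proof.
  intros H. unfold Gc.
  assert (Hq : 0 < sqrt (2 - 2*c)) by (apply sqrt_lt_R0; lra).
  assert (E : 1 - c = sqrt (2 - 2*c)^2 / 2) by (rewrite pow2_sqrt by lra; field).
  rewrite E. field. lra.
Qed.

Lemma Gc_one : Gc 1 = 0.
Proof. unfold Gc. unfold Rdiv. ring. Qed.

Lemma Gc_m1 : Gc (-1) = 1/4.
Proof. rewrite Gc_eq by lra. replace (2 - 2 * -1) with (2^2) by ring. rewrite sqrt_pow2 by lra. field. Qed.

Lemma Gc_nonneg c : c <= 1 -> 0 <= Gc c.
Proof.
  intros H. destruct (Req_dec c 1) as [->|Hne]; [rewrite Gc_one; lra|].
  rewrite Gc_eq by lra. apply Rlt_le, Rinv_0_lt_compat.
  assert (0 < sqrt (2 - 2*c)) by (apply sqrt_lt_R0; lra). lra.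
Qed.

Lemma Gc_mono c1 c2 : c1 <= c2 -> c2 < 1 -> Gc c1 <= Gc c2.
Proof.
  intros H1 H2. rewrite !Gc_eq by lra.
  assert (0 < sqrt (2 - 2*c2)) by (apply sqrt_lt_R0; lra).
  assert (sqrt (2 - 2*c2) <= sqrt (2 - 2*c1)) by (apply sqrt_le_1_alt; lra).
  apply Rinv_le_contravar; lra.
Qed.

Lemma Gc_csc b : 0 < b < 2*PI -> Gc (cos b) = / (4 * sin (b/2)).
Proof.
  intros Hb. 
  assert (Hs : 0 < sin (b/2)) by (apply sin_gt_0; lra).
  assert (Hc : cos b < 1).
  { replace b with (2 * (b/2)) by field. rewrite cos_2a_sin. nra. }
  rewrite Gc_eq by auto.
  replace (2 - 2 * cos b) with ((2 * sin (b/2))^2).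
  - rewrite sqrt_pow2 by lra. field. lra.
  - replace b with (2 * (b/2)) at 2 by field. rewrite cos_2a_sin. ring.
Qed.

Lemma csum_evenodd f n : csum f (2*n) = csum (fun l => f (2*l)%nat) n + csum (fun l => f (2*l+1)%nat) n.
Proof.
  induction n.
  - simpl. ring.
  - replace (2 * S n)%nat with (S (S (2*n))) by lia.
    change (csum f (S (S (2*n)))) with (csum f (2*n) + f (2*n)%nat + f (S (2*n))). rewrite IHn.
    change (csum (fun l => f (2 * l)%nat) (S n)) with (csum (fun l => f (2 * l)%nat) n + f (2*n)%nat).
    change (csum (fun l => f (2 * l + 1)%nat) (S n)) with (csum (fun l => f (2 * l + 1)%nat) n + f (2*n+1)%nat).
    replace (2*n+1)%nat with (S (2*n)) by lia. ring.
Qed.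

Definition cscS n := csum (fun k => / (4 * sin (INR (S k) * PI / (2 * INR n)))) (n - 1).

Lemma ST_fold n : (2 <= n)%nat -> sS n + tT n = 1/4 + 2 * cscS n.
Proof.
  intros Hn. assert (HnR : 0 < INR n) by (apply lt_0_INR; lia).
  set (g := fun k => Gc (cos (INR k * PI / INR n))).
  assert (E1 : sS n + tT n = csum g (2*n)).
  { rewrite csum_evenodd. unfold sS, tT, Ssum. f_equal; apply csum_ext; intros l _; unfold g.
    - rewrite mult_INR. simpl INR. f_equal. f_equal. field. lra.
    - rewrite plus_INR, mult_INR. simpl INR. f_equal. f_equal. field. lra. }
  rewrite E1.
  replace (2*n)%nat with ((S n) + (n-1))%nat by lia. rewrite csum_split.
  simpl csum at 1.
  replace n with (S (n - 1)) at 1 by lia. rewrite csum_S_l.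
  replace (S (n-1)) with n by lia.
  assert (E2 : csum (fun l => g (S n + l)%nat) (n - 1) = csum (fun k => g (S k)) (n - 1)).
  { rewrite <- csum_rev. apply csum_ext. intros j Hj. unfold g.
    replace (S n + (n - 1 - 1 - j))%nat with (2*n - S j)%nat by lia.
    rewrite (minus_INR (2*n) (S j)) by lia. rewrite mult_INR.
    replace (INR 2) with 2 by (simpl; ring).
    replace ((2 * INR n - INR (S j)) * PI / INR n) with (- (INR (S j) * PI / INR n) + 2*PI) by (field; lra).
    rewrite cos_per, cos_neg. reflexivity. }
  rewrite E2.
  assert (E3 : g 0%nat = 0) by (unfold g; simpl INR; rewrite Rmult_0_l, Rdiv_0_l, cos_0; apply Gc_one).
  assert (E4 : g n = 1/4) by (unfold g; replace (INR n * PI / INR n) with PI by (field; lra); rewrite cos_PI; apply Gc_m1).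
  rewrite E3, E4. unfold cscS.
  rewrite (csum_ext (fun k => g (S k)) (fun k => / (4 * sin (INR (S k) * PI / (2 * INR n))))).
  - ring.
  - intros k Hk. unfold g. rewrite Gc_csc.
    + f_equal. f_equal. f_equal. field. lra.
    + pose proof PI_RGT_0. assert (INR (S k) < INR n) by (apply lt_INR; lia).
      assert (0 < INR (S k)) by (apply lt_0_INR; lia). split.
      * apply Rdiv_lt_0_compat; nra.
      * apply (Rmult_lt_reg_r (INR n)); auto. unfold Rdiv. rewrite Rmult_assoc, Rinv_l by lra. nra.
Qed.

Definition Pm (m : nat) (N : nat) := csum (fun k => INR (S k) ^ m) N.
Definition harmc (N : nat) := csum (fun k => / INR (S k)) N.

Lemma harm_csum N : harm N = harmc N.
Proof. induction N; [reflexivity|]. change (harm (S N)) with (harm N + / INR (S N)). rewrite IHN. reflexivity. Qed.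

Lemma Pm_lb m N : (m = 1 \/ m = 3 \/ m = 5 \/ m = 7)%nat ->
  INR (S N) ^ (S m) / INR (S m) - INR (S N) ^ m / 2 <= Pm m N.
Proof.
  intros Hm. induction N.
  - unfold Pm; simpl csum. simpl INR. rewrite !pow1.
    destruct Hm as [ -> | [ -> | [ -> | -> ]]]; simpl INR; lra.
  - change (Pm m (S N)) with (Pm m N + INR (S N) ^ m).
    set (y := INR (S N)) in *.
    assert (Hy : 0 <= y) by (unfold y; apply pos_INR).
    replace (INR (S (S N))) with (y + 1) by (unfold y; rewrite (S_INR (S N)); ring).
    assert (D : y ^ S m / INR (S m) + y ^ m / 2 + (y + 1)^m / 2 - (y + 1) ^ S m / INR (S m) >= 0).
    { assert (0 <= y^2) by (apply pow_le; lra). assert (0 <= y^3) by (apply pow_le; lra).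
      assert (0 <= y^4) by (apply pow_le; lra). assert (0 <= y^5) by (apply pow_le; lra).
      destruct Hm as [ -> | [ -> | [ -> | -> ]]]; simpl INR.
      - replace (y ^ 2 / (1 + 1) + y ^ 1 / 2 + (y + 1) ^ 1 / 2 - (y + 1) ^ 2 / (1 + 1)) with 0 by field. lra.
      - replace (y ^ 4 / (1 + 1 + 1 + 1) + y ^ 3 / 2 + (y + 1) ^ 3 / 2 - (y + 1) ^ 4 / (1 + 1 + 1 + 1))
          with (1/4 + y/2) by field. lra.
      - replace (y ^ 6 / (1 + 1 + 1 + 1 + 1 + 1) + y ^ 5 / 2 + (y + 1) ^ 5 / 2 - (y + 1) ^ 6 / (1 + 1 + 1 + 1 + 1 + 1))
          with (1/3 + 3/2*y + 5/2*y^2 + 5/3*y^3) by field. lra.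
      - replace (y ^ 8 / (1 + 1 + 1 + 1 + 1 + 1 + 1 + 1) + y ^ 7 / 2 + (y + 1) ^ 7 / 2 - (y + 1) ^ 8 / (1 + 1 + 1 + 1 + 1 + 1 + 1 + 1))
          with (3/8 + 5/2*y + 7*y^2 + 21/2*y^3 + 35/4*y^4 + 7/2*y^5) by field. lra. }
    lra.
Qed.

Lemma Tsum_decomp N h : h <> 0 ->
  csum (fun k => Tpoly (INR (S k) * h)) N =
    / h * harmc N + h/6 * Pm 1 N + 7*h^3/360 * Pm 3 N + 31*h^5/15120 * Pm 5 N + 127*h^7/604800 * Pm 7 N.
Proof.
  intros Hh. unfold harmc, Pm. rewrite <- !csum_scal, <- !csum_plus. apply csum_ext.
  intros k _. unfold Tpoly. assert (INR (S k) <> 0) by (apply not_0_INR; lia). field. auto.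
Qed.

Lemma cscS_lb n : (2 <= n)%nat ->
  1/4 * csum (fun k => Tpoly (INR (S k) * (PI / (2 * INR n)))) (n - 1) <= cscS n.
Proof.
  intros Hn. unfold cscS. rewrite <- csum_scal. apply csum_le. intros k Hk.
  assert (HnR : 0 < INR n) by (apply lt_0_INR; lia).
  pose proof PI_bounds.
  assert (H1 : 0 < INR (S k)) by (apply lt_0_INR; lia).
  assert (H2 : INR (S k) < INR n) by (apply lt_INR; lia).
  set (x := INR (S k) * (PI / (2 * INR n))).
  replace (INR (S k) * PI / (2 * INR n)) with x by (unfold x; field; lra).
  assert (Hx0 : 0 < x) by (unfold x; apply Rmult_lt_0_compat; [lra| apply Rdiv_lt_0_compat; lra]).
  assert (Hx1 : x <= 1.6).
  { unfold x. apply Rle_trans with (INR n * (PI / (2 * INR n))).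
    - apply Rmult_le_compat_r; [apply Rlt_le, Rdiv_lt_0_compat; lra | lra].
    - replace (INR n * (PI / (2 * INR n))) with (PI/2) by (field; lra). lra. }
  pose proof (csc_lb x Hx0 Hx1).
  assert (0 < sin x) by (apply sin_gt_0; lra).
  rewrite Rinv_mult. lra.
Qed.

Definition Kpoly (p nn : R) : R :=
  1/6 * (p/2) * (nn/2 - 1/2) + 7/360 * (p/2)^3 * (nn/4 - 1/2) + 31/15120 * (p/2)^5 * (nn/6 - 1/2)
  + 127/604800 * (p/2)^7 * (nn/8 - 1/2).

Lemma ST_lb n : (2 <= n)%nat ->
  1/4 + INR n / PI * harm (n - 1) + 1/2 * Kpoly PI (INR n) <= sS n + tT n.
Proof.
  intros Hn. rewrite ST_fold by auto.
  assert (HnR : 0 < INR n) by (apply lt_0_INR; lia). pose proof PI_bounds.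
  pose proof (cscS_lb n Hn) as L.
  set (h := PI / (2 * INR n)) in L.
  assert (Hh : 0 < h) by (unfold h; apply Rdiv_lt_0_compat; lra).
  rewrite Tsum_decomp in L by lra.
  replace (S (n - 1)) with n in * by lia.
  assert (EN : INR (S (n-1)) = INR n) by (f_equal; lia).
  pose proof (Pm_lb 1 (n-1) ltac:(lia)) as P1. pose proof (Pm_lb 3 (n-1) ltac:(lia)) as P3.
  pose proof (Pm_lb 5 (n-1) ltac:(lia)) as P5. pose proof (Pm_lb 7 (n-1) ltac:(lia)) as P7.
  rewrite EN in P1, P3, P5, P7. simpl INR in P1, P3, P5, P7.
  assert (Q1 : h/6 * Pm 1 (n-1) >= 1/6 * (PI/2) * (INR n/2 - 1/2)).
  { assert (E : 1/6 * (PI/2) * (INR n/2 - 1/2) = h/6 * (INR n ^ 2 / (1 + 1) - INR n ^ 1 / 2)) by (unfold h; field; lra).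
    rewrite E. apply Rle_ge, Rmult_le_compat_l; [lra| exact P1]. }
  assert (Q3 : 7*h^3/360 * Pm 3 (n-1) >= 7/360 * (PI/2)^3 * (INR n/4 - 1/2)).
  { assert (E : 7/360 * (PI/2)^3 * (INR n/4 - 1/2) = 7*h^3/360 * (INR n ^ 4 / (1 + 1 + 1 + 1) - INR n ^ 3 / 2)) by (unfold h; field; lra).
    rewrite E. apply Rle_ge, Rmult_le_compat_l; [assert (0 < h^3) by (apply pow_lt; lra); lra| exact P3]. }
  assert (Q5 : 31*h^5/15120 * Pm 5 (n-1) >= 31/15120 * (PI/2)^5 * (INR n/6 - 1/2)).
  { assert (E : 31/15120 * (PI/2)^5 * (INR n/6 - 1/2) = 31*h^5/15120 * (INR n ^ 6 / (1 + 1 + 1 + 1 + 1 + 1) - INR n ^ 5 / 2)) by (unfold h; field; lra).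
    rewrite E. apply Rle_ge, Rmult_le_compat_l; [assert (0 < h^5) by (apply pow_lt; lra); lra| exact P5]. }
  assert (Q7 : 127*h^7/604800 * Pm 7 (n-1) >= 127/604800 * (PI/2)^7 * (INR n/8 - 1/2)).
  { assert (E : 127/604800 * (PI/2)^7 * (INR n/8 - 1/2) = 127*h^7/604800 * (INR n ^ 8 / (1 + 1 + 1 + 1 + 1 + 1 + 1 + 1) - INR n ^ 7 / 2)) by (unfold h; field; lra).
    rewrite E. apply Rle_ge, Rmult_le_compat_l; [assert (0 < h^7) by (apply pow_lt; lra); lra| exact P7]. }
  assert (EH : / h * harmc (n - 1) = 2 * (INR n / PI * harm (n-1))) by (rewrite harm_csum; unfold h; field; lra).
  unfold Kpoly. lra.
Qed.

Lemma ST_ub n : (2 <= n)%nat -> sS n + tT n <= 1/4 + INR n / PI * harm (n - 1) + (INR n - 1)/4.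
Proof.
  intros Hn. rewrite ST_fold by auto.
  assert (HnR : 0 < INR n) by (apply lt_0_INR; lia). pose proof PI_bounds.
  assert (L : cscS n <= csum (fun k => 1/4 * (/ (INR (S k) * (PI / (2 * INR n)))) + 1/8) (n - 1)).
  { unfold cscS. apply csum_le. intros k Hk.
    assert (H1 : 0 < INR (S k)) by (apply lt_0_INR; lia).
    assert (H2 : INR (S k) < INR n) by (apply lt_INR; lia).
    set (x := INR (S k) * (PI / (2 * INR n))).
    replace (INR (S k) * PI / (2 * INR n)) with x by (unfold x; field; lra).
    assert (Hx0 : 0 < x) by (unfold x; apply Rmult_lt_0_compat; [lra| apply Rdiv_lt_0_compat; lra]).
    assert (Hx1 : x <= 1.6).
    { unfold x. apply Rle_trans with (INR n * (PI / (2 * INR n))).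
      - apply Rmult_le_compat_r; [apply Rlt_le, Rdiv_lt_0_compat; lra | lra].
      - replace (INR n * (PI / (2 * INR n))) with (PI/2) by (field; lra). lra. }
    pose proof (csc_ub x Hx0 Hx1). rewrite Rinv_mult. lra. }
  rewrite csum_plus, csum_scal in L.
  assert (E1 : csum (fun k => / (INR (S k) * (PI / (2 * INR n)))) (n - 1) = 2 * INR n / PI * harm (n-1)).
  { rewrite harm_csum. unfold harmc. rewrite <- csum_scal. apply csum_ext. intros k _.
    assert (INR (S k) <> 0) by (apply not_0_INR; lia). field. split; lra. }
  assert (E2 : csum (fun _ => 1/8) (n - 1) = INR (n - 1) / 8).
  { clear. induction (n - 1)%nat; [simpl; lra|]. simpl csum. rewrite IHn0, S_INR. lra. }
  rewrite E1, E2 in L. rewrite minus_INR in L by lia. simpl INR in L. lra.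
Qed.

Lemma harm_mono a b : (a <= b)%nat -> harm a <= harm b.
Proof.
  induction 1; [lra|]. change (harm (S m)) with (harm m + / INR (S m)).
  assert (0 < / INR (S m)) by (apply Rinv_0_lt_compat, lt_0_INR; lia). lra.
Qed.

Lemma harm_ub n : (237 <= n)%nat -> harm (n - 1) <= harm 236 + (INR n - 237)/237.
Proof.
  intros Hn. induction Hn.
  - simpl (237 - 1)%nat. replace (INR 237) with 237 by (rewrite INR_IZR_INZ; reflexivity). lra.
  - replace (S m - 1)%nat with (S (m - 1)) by lia.
    change (harm (S (m - 1))) with (harm (m-1) + / INR (S (m - 1))).
    replace (S (m - 1)) with m by lia. rewrite S_INR.
    assert (237 <= INR m) by (replace 237 with (INR 237) by (rewrite INR_IZR_INZ; reflexivity); apply le_INR; auto).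
    assert (/ INR m <= / 237) by (apply Rinv_le_contravar; lra). lra.
Qed.

Lemma INR_ge237 n : (237 <= n)%nat -> 237 <= INR n.
Proof. intros H. replace 237 with (INR 237) by (rewrite INR_IZR_INZ; reflexivity). apply le_INR; auto. Qed.

Lemma ST_gt n : (237 <= n)%nat -> 2 * INR n < sS n + tT n.
Proof.
  intros Hn. pose proof (ST_lb n ltac:(lia)) as L.
  pose proof PI_bounds as [P1 P2]. pose proof harm236_bounds as [H1 H2].
  pose proof (harm_mono 236 (n-1) ltac:(lia)) as HM.
  pose proof (INR_ge237 n Hn) as HN.
  assert (A : INR n / PI * harm (n - 1) >= INR n * (6.0431 / 3.1416)).
  { unfold Rdiv. rewrite Rmult_assoc. apply Rle_ge, Rmult_le_compat_l; [lra|].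
    apply Rle_trans with (6.0431 * / PI).
    - apply Rmult_le_compat_l; [lra|]. apply Rinv_le_contravar; lra.
    - rewrite Rmult_comm. apply Rmult_le_compat_l; [apply Rlt_le, Rinv_0_lt_compat; lra| lra]. }
  set (q := PI/2) in *.
  assert (Q1 : 1.570795 <= q) by (unfold q; lra).
  assert (K : Kpoly PI (INR n) >= 1/6 * 1.570795 * (INR n/2 - 1/2) + 7/360 * 1.570795^3 * (INR n/4 - 1/2)
                  + 31/15120 * 1.570795^5 * (INR n/6 - 1/2) + 127/604800 * 1.570795^7 * (INR n/8 - 1/2)).
  { unfold Kpoly. fold q.
    assert (1.570795^3 <= q^3) by (apply pow_incr; lra).
    assert (1.570795^5 <= q^5) by (apply pow_incr; lra).
    assert (1.570795^7 <= q^7) by (apply pow_incr; lra).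
    assert (0 <= INR n/4 - 1/2) by lra. assert (0 <= INR n/6 - 1/2) by lra. assert (0 <= INR n/8 - 1/2) by lra.
    apply Rle_ge.
    repeat apply Rplus_le_compat; apply Rmult_le_compat_r; lra. }
  lra.
Qed.

Lemma angle_facts n l : (2 <= n)%nat -> (l < n)%nat ->
  0 < 2*PI*INR l/INR n + PI/INR n < 2*PI.
Proof.
  intros Hn Hl. assert (HnR : 0 < INR n) by (apply lt_0_INR; lia).
  assert (INR l + 1 <= INR n) by (rewrite <- S_INR; apply le_INR; lia).
  pose proof (pos_INR l). pose proof PI_RGT_0.
  split.
  - apply Rplus_le_lt_0_compat; [|apply Rdiv_lt_0_compat; lra].
    apply Rmult_le_pos; [nra| apply Rlt_le, Rinv_0_lt_compat; lra].
  - replace (2 * PI * INR l / INR n + PI / INR n) with (PI * (2*INR l + 1) / INR n) by (field; lra).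
    apply (Rmult_lt_reg_r (INR n)); auto. unfold Rdiv. rewrite Rmult_assoc, Rinv_l by lra. nra.
Qed.

Lemma cos_beta_lt1 n l : (2 <= n)%nat -> (l < n)%nat -> cos (2*PI*INR l/INR n + PI/INR n) < 1.
Proof. intros. apply cos_lt_1_gen. apply angle_facts; auto. Qed.

Lemma tT_minus_sS n : (237 <= n)%nat -> INR n / (4 * PI) - 1/8 <= tT n - sS n.
Proof.
  intros Hn. assert (Hn2 : (2 <= n)%nat) by lia.
  assert (HnR : 0 < INR n) by (apply lt_0_INR; lia). pose proof PI_bounds.
  pose proof (INR_ge237 n Hn).
  set (m := (n / 2)%nat).
  assert (Hm : (2 * m <= n <= 2*m + 1)%nat) by (pose proof (Nat.div_mod n 2); pose proof (Nat.mod_upper_bound n 2); unfold m; lia).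
  set (t := fun l => Gc (cos (2*PI*INR l/INR n + PI/INR n))).
  set (s := fun l => Gc (cos (2*PI*INR l/INR n + 0))).
  assert (ET : tT n = csum t m + t m + csum (fun j => t (m + 1 + j)%nat) (n - m - 1)).
  { unfold tT, Ssum. fold t. replace n with (m + S (n - m - 1))%nat at 1 by lia.
    rewrite csum_split, csum_S_l. rewrite Nat.add_0_r.
    rewrite (csum_ext (fun l => t (m + S l)%nat) (fun j => t (m + 1 + j)%nat)) by (intros; f_equal; lia). ring. }
  assert (ES : sS n = csum (fun l => s (S l)) m + csum (fun j => s (m + 1 + j)%nat) (n - m - 1)).
  { unfold sS, Ssum. fold s. replace n with (S (n - 1)) at 1 by lia. rewrite csum_S_l.
    replace (n - 1)%nat with (m + (n - m - 1))%nat by lia. rewrite csum_split.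
    assert (s 0%nat = 0) by (unfold s; simpl INR; replace (2 * PI * 0 / INR n + 0) with 0 by (field; lra); rewrite cos_0; apply Gc_one).
    rewrite (csum_ext (fun l => s (S (m + l))) (fun j => s (m + 1 + j)%nat)) by (intros; f_equal; lia). lra. }
  assert (B1 : forall l, (l < m)%nat -> s (S l) <= t l).
  { intros l Hl. unfold s, t. apply Gc_mono.
    - rewrite Rplus_0_r. apply Rlt_le, cos_decreasing_1.
      + destruct (angle_facts n l Hn2 ltac:(lia)); lra.
      + replace (2 * PI * INR l / INR n + PI / INR n) with (PI * (2 * INR l + 1) / INR n) by (field; lra).
        apply (Rmult_le_reg_r (INR n)); auto. unfold Rdiv. rewrite Rmult_assoc, Rinv_l by lra.
        assert (2 * INR l + 1 <= INR n).
        { replace (2 * INR l + 1) with (INR (2*l+1)) by (rewrite plus_INR, mult_INR; simpl; ring). apply le_INR; lia. }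
        nra.
      + apply Rmult_le_pos; [pose proof (pos_INR (S l)); nra| apply Rlt_le, Rinv_0_lt_compat; lra].
      + apply (Rmult_le_reg_r (INR n)); auto. unfold Rdiv. rewrite Rmult_assoc, Rinv_l by lra.
        assert (2 * INR (S l) <= INR n).
        { replace (2 * INR (S l)) with (INR (2*S l)) by (rewrite mult_INR; simpl; ring). apply le_INR; lia. }
        nra.
      + rewrite S_INR. unfold Rdiv. 
        assert (0 < PI * / INR n) by (apply Rmult_lt_0_compat; [lra| apply Rinv_0_lt_compat; lra]). nra.
    - apply cos_beta_lt1; lia. }
  assert (B2 : forall j, (j < n - m - 1)%nat -> s (m + 1 + j)%nat <= t (m + 1 + j)%nat).
  { intros j Hj. set (l := (m + 1 + j)%nat). assert (Hl : (l < n)%nat) by (unfold l; lia).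
    unfold s, t. apply Gc_mono.
    - rewrite Rplus_0_r. apply Rlt_le, cos_increasing_1.
      + apply (Rmult_le_reg_r (INR n)); auto. unfold Rdiv. rewrite Rmult_assoc, Rinv_l by lra.
        assert (INR n <= 2 * INR l).
        { replace (2 * INR l) with (INR (2*l)) by (rewrite mult_INR; simpl; ring). apply le_INR. unfold l. lia. }
        nra.
      + apply (Rmult_le_reg_r (INR n)); auto. unfold Rdiv. rewrite Rmult_assoc, Rinv_l by lra.
        assert (INR l <= INR n) by (apply le_INR; lia). nra.
      + apply Rle_trans with (2 * PI * INR l / INR n); [|assert (0 < PI / INR n) by (apply Rdiv_lt_0_compat; lra); lra].
        apply (Rmult_le_reg_r (INR n)); auto. unfold Rdiv. rewrite Rmult_assoc, Rinv_l by lra.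
        assert (INR n <= 2 * INR l).
        { replace (2 * INR l) with (INR (2*l)) by (rewrite mult_INR; simpl; ring). apply le_INR. unfold l. lia. }
        nra.
      + destruct (angle_facts n l Hn2 Hl); lra.
      + assert (0 < PI / INR n) by (apply Rdiv_lt_0_compat; lra). lra.
    - apply cos_beta_lt1; lia. }
  assert (Bm : 0 <= t m) by (unfold t; apply Gc_nonneg; apply COS_bound).
  assert (Hm1 : (1 <= m)%nat) by lia.
  assert (C1 : t 0%nat - s 1%nat <= csum t m - csum (fun l => s (S l)) m).
  { rewrite <- csum_minus. replace m with (S (m - 1)) at 1 by lia. rewrite csum_S_l.
    assert (0 <= csum (fun l => t (S l) - s (S (S l))) (m - 1)).
    { apply csum_nonneg. intros l Hl. assert (s (S (S l)) <= t (S l)) by (apply B1; lia). lra. }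
    lra. }
  assert (C2 : 0 <= csum (fun j => t (m + 1 + j)%nat) (n - m - 1) - csum (fun j => s (m + 1 + j)%nat) (n - m - 1)).
  { rewrite <- csum_minus. apply csum_nonneg. intros j Hj. pose proof (B2 j Hj). lra. }
  assert (T0 : INR n / (2 * PI) <= t 0%nat).
  { unfold t. simpl INR. replace (2 * PI * 0 / INR n + PI / INR n) with (PI / INR n) by (field; lra).
    rewrite Gc_csc.
    2:{ split; [apply Rdiv_lt_0_compat; lra|].
        apply (Rmult_lt_reg_r (INR n)); auto. unfold Rdiv. rewrite Rmult_assoc, Rinv_l by lra. nra. }
    set (x := PI / INR n / 2).
    assert (Hx : 0 < x) by (unfold x; apply Rdiv_lt_0_compat; [apply Rdiv_lt_0_compat|]; lra).
    assert (Hx4 : x <= PI/2).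
    { unfold x. assert (PI / INR n <= PI) .
      { apply (Rmult_le_reg_r (INR n)); auto. unfold Rdiv. rewrite Rmult_assoc, Rinv_l by lra. nra. }
      lra. }
    pose proof (sin_le_x' x ltac:(lra) ltac:(lra)).
    assert (0 < sin x) by (apply sin_gt_0; lra).
    replace (INR n / (2 * PI)) with (/ (4 * x)) by (unfold x; field; lra).
    apply Rinv_le_contravar; lra. }
  assert (S1 : s 1%nat <= (INR n / PI + 1/2) / 4).
  { unfold s. simpl INR. replace (2 * PI * 1 / INR n + 0) with (2 * (PI / INR n)) by (field; lra).
    set (x := PI / INR n).
    assert (Hx : 0 < x) by (unfold x; apply Rdiv_lt_0_compat; lra).
    assert (Hx1 : x <= 1.6).
    { unfold x. apply (Rmult_le_reg_r (INR n)); auto. unfold Rdiv. rewrite Rmult_assoc, Rinv_l by lra. nra. }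
    rewrite Gc_csc.
    2:{ split; lra. }
    replace (2 * x / 2) with x by field.
    pose proof (csc_ub x Hx Hx1).
    assert (0 < sin x) by (apply sin_gt_0; lra).
    replace (INR n / PI) with (/ x) by (unfold x; field; lra).
    rewrite Rinv_mult. lra. }
  replace (INR n / (4*PI)) with (INR n / (2*PI) - (INR n/PI)/4) by (field; lra).
  rewrite ET, ES. lra.
Qed.

Lemma D_pos r c : 0 < r -> c < 1 -> 0 < 1 + r^2 - 2*r*c.
Proof. intros. replace (1 + r^2 - 2*r*c) with ((1-r)^2 + 2*r*(1-c)) by ring. assert (0 <= (1-r)^2) by (apply pow2_ge_0). assert (0 < 2*r*(1-c)) by (apply Rmult_lt_0_compat; lra). lra. Qed.

Lemma phi_le r c : 0 < r <= 1 -> c < 1 ->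
  (r - c) / sqrt (1 + r^2 - 2*r*c)^3 <= Gc c / r^2.
Proof.
  intros Hr Hc. pose proof (D_pos r c ltac:(lra) Hc) as HD.
  assert (HsD : 0 < sqrt (1 + r^2 - 2*r*c)) by (apply sqrt_lt_R0; auto).
  assert (HG : 0 <= Gc c) by (apply Gc_nonneg; lra).
  assert (0 < r^2) by nra.
  destruct (Rle_dec r c) as [Hrc|Hrc].
  - assert ((r - c) / sqrt (1 + r^2 - 2*r*c)^3 <= 0).
    { unfold Rdiv. apply Rmult_le_0_r; [lra| apply Rlt_le, Rinv_0_lt_compat, pow_lt; auto]. }
    assert (0 <= Gc c / r^2) by (apply Rmult_le_pos; [auto| apply Rlt_le, Rinv_0_lt_compat; auto]). lra.
  - set (q := sqrt (2 - 2*c)). assert (Hq : 0 < q) by (apply sqrt_lt_R0; lra).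
    assert (Hsr : r <= sqrt r).
    { rewrite <- (sqrt_pow2 r) at 1 by lra. apply sqrt_le_1_alt. nra. }
    assert (Hsr0 : 0 < sqrt r) by (apply sqrt_lt_R0; lra).
    assert (H1 : sqrt r * q <= sqrt (1 + r^2 - 2*r*c)).
    { unfold q. rewrite <- sqrt_mult by lra. apply sqrt_le_1_alt. nra. }
    assert (H2 : r^2 * q^3 <= sqrt (1 + r^2 - 2*r*c)^3).
    { apply Rle_trans with ((sqrt r * q)^3).
      - replace ((sqrt r * q)^3) with (sqrt r ^2 * sqrt r * q^3) by ring. rewrite pow2_sqrt by lra.
        assert (0 < q^3) by (apply pow_lt; auto). 
        replace (r^2) with (r * r) by ring. apply Rmult_le_compat_r; [lra|]. apply Rmult_le_compat_l; lra.
      - apply pow_incr. split; [apply Rmult_le_pos; lra| auto]. }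
    rewrite Gc_eq by auto. 
    assert (E : / (2 * sqrt (2 - 2 * c)) / r^2 = (1 - c) / (r^2 * q^3)).
    { pose proof Hq as Hq'. unfold q in Hq'. unfold q. assert (E2 : 1 - c = sqrt (2 - 2*c)^2 / 2) by (rewrite pow2_sqrt by lra; field).
      rewrite E2. field. split; lra. }
    rewrite E.
    apply Rle_trans with ((r - c) / (r^2 * q^3)).
    + unfold Rdiv. apply Rmult_le_compat_l; [lra|]. apply Rinv_le_contravar; auto.
      apply Rmult_lt_0_compat; [auto| apply pow_lt; auto].
    + unfold Rdiv. apply Rmult_le_compat_r; [apply Rlt_le, Rinv_0_lt_compat, Rmult_lt_0_compat; [auto| apply pow_lt; auto]| lra].
Qed.

Lemma Ppoly_nonneg x d : 0 < x <= 2 -> 0 <= d <= 1/50 -> d^4 <= x ->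
  (d^2 + 2*(1-d)*x)^3 <= 8*x*(x + d - d*x)^2.
Proof.
  intros Hx Hd H4.
  assert (E : 8*x*(x + d - d*x)^2 - (d^2 + 2*(1-d)*x)^3 =
     x^2*d*(16 - 28*d - 16*x*d - 12*d^3) + 8*x^3*d + x*d^2*(8 - 6*d^2) + 24*x^2*d^3 + 8*x^3*d^3 + 6*x*d^5 - d^6) by ring.
  assert (A1 : 0 <= x^2*d*(16 - 28*d - 16*x*d - 12*d^3)).
  { apply Rmult_le_pos; [apply Rmult_le_pos; nra|]. assert (d^3 <= 1) by (simpl; nra). nra. }
  assert (A2 : 0 <= 8*x^3*d + 24*x^2*d^3 + 8*x^3*d^3 + 6*x*d^5).
  { assert (0 <= x^3) by (apply pow_le; lra). assert (0 <= d^3) by (apply pow_le; lra).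
    assert (0 <= d^5) by (apply pow_le; lra). assert (0 <= x^2) by nra. nra. }
  assert (A3 : d^6 <= x*d^2*(8 - 6*d^2)).
  { replace (d^6) with (d^4 * d^2) by ring. assert (0 <= d^2) by nra. assert (d^2 <= 1) by nra.
    assert (d^4 * d^2 <= x * d^2) by (apply Rmult_le_compat_r; lra). nra. }
  lra.
Qed.

Lemma psi_ge r c : 0 <= 1 - r <= 1/50 -> -1 <= c -> c < 1 -> (1 - r)^4 <= 1 - c ->
  Gc c <= (1 - r*c) / sqrt (1 + r^2 - 2*r*c)^3.
Proof.
  intros Hd Hc1 Hc2 H4. set (d := 1 - r) in *. set (x := 1 - c) in *.
  assert (Hr : r = 1 - d) by (unfold d; ring). assert (Hcx : c = 1 - x) by (unfold x; ring).
  pose proof (D_pos r c ltac:(lra) Hc2) as HD.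
  set (D := 1 + r^2 - 2*r*c) in *.
  assert (ED : D = d^2 + 2*(1-d)*x) by (unfold D; rewrite Hr, Hcx; ring).
  assert (EN : 1 - r*c = x + d - d*x) by (rewrite Hr, Hcx; ring).
  set (sD := sqrt D). assert (HsD : 0 < sD) by (apply sqrt_lt_R0; auto).
  set (q := sqrt (2 - 2*c)). assert (Hq : 0 < q) by (apply sqrt_lt_R0; lra).
  assert (Hq2 : q^2 = 2*x) by (unfold q; rewrite pow2_sqrt by lra; unfold x; ring).
  assert (HsD2 : sD^2 = D) by (unfold sD; rewrite pow2_sqrt by lra; auto).
  assert (Hx : 0 < x <= 2) by lra.
  assert (HP := Ppoly_nonneg x d Hx Hd H4). rewrite <- ED, <- EN in HP.
  assert (HN : 0 < 1 - r*c) by (rewrite EN; nra).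
  assert (HAB : x * sD^3 <= (1 - r*c) * q^3).
  { assert (0 <= (1 - r*c) * q^3) by (apply Rmult_le_pos; [lra| apply pow_le; lra]).
    assert (0 <= x * sD^3) by (apply Rmult_le_pos; [lra| apply pow_le; lra]).
    assert (Sq : (x * sD^3)^2 <= ((1 - r*c) * q^3)^2).
    { replace ((x * sD^3)^2) with (x^2 * (sD^2)^3) by ring.
      replace (((1 - r*c) * q^3)^2) with ((1 - r*c)^2 * (q^2)^3) by ring.
      rewrite HsD2, Hq2. replace ((1 - r * c) ^ 2 * (2 * x) ^ 3) with (x^2 * (8 * x * (1 - r*c)^2)) by ring.
      apply Rmult_le_compat_l; [nra| lra]. }
    nra. }
  unfold Gc. fold q. fold x.
  assert (0 < q^3) by (apply pow_lt; auto). assert (0 < sD^3) by (apply pow_lt; auto).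
  apply (Rmult_le_reg_r (q^3 * sD^3)); [nra|].
  unfold Rdiv. 
  replace (x * / q ^ 3 * (q ^ 3 * sD ^ 3)) with (x * sD^3) by (field; lra).
  replace ((1 - r * c) * / sD ^ 3 * (q ^ 3 * sD ^ 3)) with ((1 - r*c) * q^3) by (field; lra).
  auto.
Qed.

Lemma cos_beta_le n l : (2 <= n)%nat -> (l < n)%nat -> cos (2*PI*INR l/INR n + PI/INR n) <= cos (PI/INR n).
Proof.
  intros Hn Hl. assert (HnR : 0 < INR n) by (apply lt_0_INR; lia). pose proof PI_RGT_0.
  set (b := 2*PI*INR l/INR n + PI/INR n).
  assert (Hb0 : PI/INR n <= b).
  { unfold b. assert (0 <= 2*PI*INR l/INR n) by (apply Rmult_le_pos; [pose proof (pos_INR l); nra| apply Rlt_le, Rinv_0_lt_compat; lra]). lra. }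
  assert (Hb1 : b <= 2*PI - PI/INR n).
  { unfold b. assert (INR l + 1 <= INR n) by (rewrite <- S_INR; apply le_INR; lia).
    apply (Rmult_le_reg_r (INR n)); auto.
    replace ((2 * PI * INR l / INR n + PI / INR n) * INR n) with (PI * (2*INR l + 1)) by (field; lra).
    replace ((2 * PI - PI / INR n) * INR n) with (PI * (2*INR n - 1)) by (field; lra). nra. }
  assert (Ha : PI / INR n <= PI).
  { apply (Rmult_le_reg_r (INR n)); auto. unfold Rdiv. rewrite Rmult_assoc, Rinv_l by lra.
    assert (2 <= INR n) by (replace 2 with (INR 2) by (simpl; ring); apply le_INR; auto). nra. }
  assert (Ha0 : 0 < PI / INR n) by (apply Rdiv_lt_0_compat; lra).
  destruct (Rle_dec b PI) as [Hb|Hb].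
  - destruct (Req_dec b (PI/INR n)) as [E|E]; [rewrite E; lra|].
    apply Rlt_le, cos_decreasing_1; lra.
  - replace (cos b) with (cos (2*PI - b)).
    + destruct (Req_dec (2*PI - b) (PI/INR n)) as [E|E]; [rewrite E; lra|].
      apply Rlt_le, cos_decreasing_1; lra.
    + replace (2*PI - b) with (- b + 2*PI) by ring. rewrite cos_per, cos_neg. reflexivity.
Qed.

Lemma Ww_ge n r : (2 <= n)%nat -> 0 <= 1 - r <= 1/50 -> (1 - r)^4 <= 1 - cos (PI/INR n) -> tT n <= Ww n r.
Proof.
  intros Hn Hd H4. unfold tT, Ww, Ssum. apply csum_le. intros l Hl.
  pose proof (cos_beta_le n l Hn Hl). pose proof (cos_beta_lt1 n l Hn Hl).
  apply psi_ge; auto.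
  - apply COS_bound.
  - lra.
Qed.

Lemma csum_ends f n : (2 <= n)%nat -> csum f n = f O + csum (fun l => f (S l)) (n - 2) + f (n - 1)%nat.
Proof.
  intros Hn. replace n with (S (S (n - 2))) at 1 by lia. rewrite csum_S_l.
  change (csum (fun l => f (S l)) (S (n - 2))) with (csum (fun l => f (S l)) (n - 2) + f (S (n - 2))).
  replace (S (n - 2)) with (n - 1)%nat by lia. ring.
Qed.

Lemma Uu_le n r : (2 <= n)%nat -> 0 < r <= 1 ->
  Uu n r <= tT n / r^2 + 2 * ((r - cos (PI/INR n)) / sqrt (1 + r^2 - 2*r*cos (PI/INR n))^3).
Proof.
  intros Hn Hr. assert (HnR : 0 < INR n) by (apply lt_0_INR; lia).
  unfold Uu, tT, Ssum. rewrite (csum_ends _ n Hn), (csum_ends (fun l => Gc (cos (2 * PI * INR l / INR n + PI / INR n))) n Hn).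
  assert (E0 : 2 * PI * INR 0 / INR n + PI / INR n = PI / INR n) by (simpl INR; field; lra).
  assert (E1 : cos (2 * PI * INR (n - 1) / INR n + PI / INR n) = cos (PI / INR n)).
  { rewrite minus_INR by lia. simpl INR.
    replace (2 * PI * (INR n - 1) / INR n + PI / INR n) with (- (PI / INR n) + 2 * PI) by (field; lra).
    rewrite cos_per, cos_neg. reflexivity. }
  rewrite E0, E1.
  assert (Hmid : csum (fun l => (r - cos (2 * PI * INR (S l) / INR n + PI / INR n)) /
                      sqrt (1 + r ^ 2 - 2 * r * cos (2 * PI * INR (S l) / INR n + PI / INR n)) ^ 3) (n - 2)
          <= csum (fun l => Gc (cos (2 * PI * INR (S l) / INR n + PI / INR n))) (n - 2) / r^2).
  { apply Rle_trans with (csum (fun l => Gc (cos (2 * PI * INR (S l) / INR n + PI / INR n)) / r^2) (n - 2)).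
    - apply csum_le. intros l Hl. apply phi_le; auto. apply cos_beta_lt1; lia.
    - unfold Rdiv. rewrite (csum_ext _ (fun l => / r^2 * Gc (cos (2 * PI * INR (S l) * / INR n + PI * / INR n)))) by (intros; ring).
      rewrite csum_scal. right; ring. }
  assert (G0 : 0 <= Gc (cos (PI / INR n))) by (apply Gc_nonneg, COS_bound).
  assert (0 < / r^2) by (apply Rinv_0_lt_compat; nra).
  unfold Rdiv in *. 
  set (M := csum (fun l => Gc (cos (2 * PI * INR (S l) / INR n + PI / INR n))) (n - 2)) in *.
  set (P := (r - cos (PI / INR n)) * / sqrt (1 + r ^ 2 - 2 * r * cos (PI / INR n)) ^ 3).
  assert (Gc (cos (PI / INR n)) * / r^2 >= 0) by (apply Rle_ge, Rmult_le_pos; lra).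
  nra.
Qed.

Lemma nearest_le n kap : (2 <= n)%nat -> 0 < kap <= sin (PI/INR n) ->
  let r := cos (PI/INR n) - kap in
  (r - cos (PI/INR n)) / sqrt (1 + r^2 - 2*r*cos (PI/INR n))^3 <= - kap / (3 * sin (PI/INR n)^3).
Proof.
  intros Hn Hk r. set (c := cos (PI/INR n)) in *. set (sg := sin (PI/INR n)) in *.
  assert (Hsc : sg^2 + c^2 = 1) by (pose proof (sin2_cos2 (PI/INR n)); unfold Rsqr in *; unfold sg, c; nra).
  assert (Hsg : 0 < sg) by lra.
  replace (1 + r^2 - 2*r*c) with (kap^2 + sg^2) by (unfold r; nra).
  replace (r - c) with (- kap) by (unfold r; ring).
  assert (H1 : sqrt (kap^2 + sg^2) <= (71/50) * sg).
  { rewrite <- (sqrt_pow2 ((71/50) * sg)) by lra. apply sqrt_le_1_alt. nra. }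
  assert (H0 : 0 < sqrt (kap^2 + sg^2)) by (apply sqrt_lt_R0; nra).
  assert (H3 : sqrt (kap^2 + sg^2)^3 <= 3 * sg^3).
  { apply Rle_trans with (((71/50) * sg)^3). apply pow_incr; lra.
    replace (((71/50) * sg)^3) with ((357911/125000) * sg^3) by field.
    assert (0 < sg^3) by (apply pow_lt; lra). lra. }
  assert (0 < sqrt (kap^2 + sg^2)^3) by (apply pow_lt; lra).
  unfold Rdiv. rewrite !Ropp_mult_distr_l_reverse. apply Ropp_le_contravar.
  apply Rmult_le_compat_l; [lra|]. apply Rinv_le_contravar; auto.
Qed.

Lemma cos_bounds x : -2 <= x <= 2 -> 1 - x^2/2 <= cos x <= 1 - x^2/2 + x^4/24.
Proof.
  intros Hx. destruct (pre_cos_bound x 0 ltac:(lra) ltac:(lra)) as [H1 H2].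
  unfold cos_approx, cos_term in H1, H2. cbn [sum_f_R0 Nat.mul Nat.add] in H1, H2.
  replace (INR (fact 0)) with 1 in H1, H2 by reflexivity.
  replace (INR (fact 2)) with 2 in H1, H2 by (rewrite INR_IZR_INZ; reflexivity).
  replace (INR (fact 4)) with 24 in H2 by (rewrite INR_IZR_INZ; reflexivity).
  simpl pow in H1, H2 |- *. lra.
Qed.

Lemma sS_nonneg n : 0 <= sS n.
Proof. unfold sS, Ssum. apply csum_nonneg. intros. apply Gc_nonneg, COS_bound. Qed.

Definition TU (n : nat) : R := INR n / PI * (6.0432 + (INR n - 237)/237) + INR n / 4.

Lemma tT_le_TU n : (237 <= n)%nat -> tT n <= TU n.
Proof.
  intros Hn. pose proof (ST_ub n ltac:(lia)). pose proof (sS_nonneg n).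
  pose proof (harm_ub n Hn). pose proof harm236_bounds. pose proof PI_bounds.
  pose proof (INR_ge237 n Hn).
  unfold TU.
  assert (INR n / PI * harm (n - 1) <= INR n / PI * (6.0432 + (INR n - 237) / 237)).
  { apply Rmult_le_compat_l; [apply Rlt_le, Rdiv_lt_0_compat; lra| lra]. }
  lra.
Qed.


Lemma analytic_facts n : (237 <= n)%nat ->
  let a := PI / INR n in
  let sg := sin a in
  let c1 := cos a in
  let t := tT n in
  let s := sS n in
  let kap := 3 * sg^3 * t in
  let rb := c1 - kap in
  0 < kap <= sg /\ 0 < rb < 1 /\ 1/2 <= rb^2 /\ 1 - rb <= 1/50 /\ (1 - rb)^4 <= 1 - c1 /\
  s < (1 - 3*(1 - rb)) * t /\ INR n < t /\ s < t /\ 2 * INR n < s + t.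
Proof.
  intros Hn a sg c1 t s kap rb.
  assert (Ea : a = PI / INR n) by reflexivity. assert (Esg : sg = sin a) by reflexivity.
  assert (Ec1 : c1 = cos a) by reflexivity. assert (Et : t = tT n) by reflexivity.
  assert (Es : s = sS n) by reflexivity. assert (Ekap : kap = 3 * sg^3 * t) by reflexivity.
  assert (Erb : rb = c1 - kap) by reflexivity.
  clearbody a sg c1 t s kap rb.
  pose proof PI_bounds as [P1 P2]. pose proof (INR_ge237 n Hn) as HN.
  set (N := INR n) in *.
  assert (Ha0 : 0 < a) by (rewrite Ea; apply Rdiv_lt_0_compat; lra).
  assert (Ha1 : a <= 3.1416/237).
  { rewrite Ea. apply Rle_trans with (3.1416 / N).
    - unfold Rdiv; apply Rmult_le_compat_r; [apply Rlt_le, Rinv_0_lt_compat; lra| lra].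
    - unfold Rdiv; apply Rmult_le_compat_l; [lra|]. apply Rinv_le_contravar; lra. }
  assert (Hsg : 0 < sg) by (rewrite Esg; apply sin_gt_0; lra).
  assert (Hsga : sg <= a) by (rewrite Esg; apply sin_le_x'; lra).
  destruct (cos_bounds a ltac:(lra)) as [C1 C2]. rewrite <- Ec1 in C1, C2.
  pose proof (ST_gt n Hn) as HST. pose proof (tT_minus_sS n Hn) as Hts. pose proof (tT_le_TU n Hn) as HTU.
  pose proof (sS_nonneg n) as Hs0. rewrite <- Es, <- Et in *.
  fold N in HST, Hts, HTU.
  assert (HNp : 18 <= N / (4*PI)).
  { apply (Rmult_le_reg_r (4*PI)); [lra|]. unfold Rdiv. rewrite Rmult_assoc, Rinv_l by lra. lra. }
  assert (Ht0 : 0 < t) by lra.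
  set (X := 6.0432 + (N - 237)/237).
  assert (HTUe : TU n = N / PI * X + N/4) by reflexivity.
  set (T := TU n) in *.
  assert (HXe : X = 6.0432 + (N - 237)/237) by reflexivity.
  clearbody T X N.
  assert (I2 : a/2 + 3 * a^2 * T <= 1/3).
  { assert (E : a/2 + 3*a^2*T = (3*PI/2 + 9*PI*X + 9*PI^2/4) / (3*N)).
    { rewrite HTUe, Ea. field. lra. }
    rewrite E. apply (Rmult_le_reg_r (3*N)); [lra|].
    unfold Rdiv. rewrite Rmult_assoc, Rinv_l by lra.
    rewrite HXe.
    assert (PI * N <= 3.1416 * N) by (apply Rmult_le_compat_r; lra).
    nra. }
  assert (HT0 : 0 < T) by lra.
  assert (Hk : kap <= 3 * a^3 * T).
  { rewrite Ekap. assert (sg^3 <= a^3) by (apply pow_incr; lra).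
    assert (0 < sg^3) by (apply pow_lt; lra). nra. }
  assert (Hk0 : 0 < kap) by (rewrite Ekap; assert (0 < sg^3) by (apply pow_lt; lra); nra).
  assert (Hks : kap <= sg).
  { rewrite Ekap. assert (sg^2 <= a^2) by (apply pow_incr; lra).
    assert (3 * sg^2 * t <= 1).
    { apply Rle_trans with (3 * a^2 * T); [|assert (0 < a) by lra; nra].
      assert (0 <= sg^2) by nra. nra. }
    replace (3 * sg^3 * t) with (sg * (3 * sg^2 * t)) by (unfold Rdiv; ring). nra. }
  assert (HD : 1 - rb <= a^2/2 + 3*a^3*T) by (rewrite Erb; lra).
  assert (HDa : a^2/2 + 3*a^3*T <= a/3).
  { replace (a^2/2 + 3*a^3*T) with (a * (a/2 + 3*a^2*T)) by (unfold Rdiv; ring). nra. }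
  assert (HIII : N/(4*PI) - 1/8 > 3 * (a^2/2 + 3*a^3*T) * T).
  { set (Y := X + PI/4).
    assert (E1 : a * T = Y) by (unfold Y; rewrite HTUe, Ea; field; lra).
    assert (E2 : 3 * (a^2/2 + 3*a^3*T) * T = 3 * (PI/N) * (1/2 + 3*Y) * Y).
    { replace (3 * (a^2/2 + 3*a^3*T) * T) with (3 * a * (1/2 + 3*(a*T)) * (a*T)) by (unfold Rdiv; ring).
      rewrite E1, Ea. unfold Rdiv; ring. }
    rewrite E2.
    assert (HY : 0 < Y) by (unfold Y; lra).
    assert (HYu : Y <= 5.8286 + N/237) by (unfold Y; lra).
    clearbody Y.
    assert (E3 : N/(4*PI) - 1/8 - 3 * (PI/N) * (1/2 + 3*Y) * Y = (N^2 - PI*N/2 - 12*PI^2*(1/2+3*Y)*Y) / (4*PI*N)).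
    { field. lra. }
    assert (HQ : 0 < (N^2 - PI*N/2 - 12*PI^2*(1/2+3*Y)*Y) / (4*PI*N)).
    { apply Rdiv_lt_0_compat; [|clear -P1 HN; nra].
      assert (H9 : PI^2 <= 9.87) by (clear -P1 P2; nra).
      set (Yu := 5.8286 + N/237) in *.
      assert (HYY : (1/2 + 3*Y)*Y <= (1/2 + 3*Yu) * Yu) by (apply Rmult_le_compat; lra).
      assert (HY0 : 0 <= (1/2 + 3*Y)*Y) by (apply Rmult_le_pos; lra).
      assert (H12 : 12*PI^2*((1/2 + 3*Y)*Y) <= 12*9.87*((1/2 + 3*Yu) * Yu)).
      { apply Rmult_le_compat; [clear -P1; nra| lra| clear -P1 P2; nra| lra]. }
      assert (HPN : PI * N <= 3.1416 * N) by (apply Rmult_le_compat_r; lra).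
      assert (HPOLY : 12*9.87*((1/2 + 3*Yu) * Yu) + 3.1416 * N / 2 < N^2).
      { unfold Yu. clear -HN. nra. }
      lra. }
    rewrite <- E3 in HQ. lra. }
  assert (Hrb1 : 1 - rb <= 1/50) by lra.
  assert (Hrb_lt : rb < 1) by (rewrite Erb, Ec1; pose proof (COS_bound a); lra).
  split; [lra|]. split; [split; lra|]. split; [clear -Hrb1; nra|]. split; [lra|].
  split.
  { assert (0 <= 1 - rb) by lra.
    apply Rle_trans with ((a/3)^4). apply pow_incr; lra.
    assert (H4 : a^4 <= a^2 * (1/100)).
    { clear - Ha0 Ha1. replace (a^4) with (a^2 * a^2) by ring. apply Rmult_le_compat_l; nra. }
    replace ((a/3)^4) with (a^4 / 81) by field.
    lra. }
  split.
  { assert (3*(1 - rb)*t <= 3 * (a^2/2 + 3*a^3*T) * T).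
    { apply Rmult_le_compat; lra. }
    lra. }
  lra.
Qed.

Lemma cont_of_derive (g : R -> R) x : ex_derive g x -> continuity_pt g x.
Proof. intros H. apply continuity_pt_filterlim. apply (ex_derive_continuous g x H). Qed.

Lemma term_cont1 c x : c < 1 -> 0 < x -> continuity_pt (fun r => (r - c) / sqrt (1 + r^2 - 2*r*c)^3) x.
Proof.
  intros Hc Hx. apply cont_of_derive. pose proof (D_pos x c Hx Hc).
  assert (0 < sqrt (1 + x^2 - 2*x*c)) by (apply sqrt_lt_R0; auto).
  auto_derive.
  assert (E : 1 + x*(x*1) + - (2*x*c) = 1 + x^2 - 2*x*c) by ring. rewrite !E.
  repeat split; try lra. apply Rgt_not_eq. repeat apply Rmult_lt_0_compat; lra.
Qed.

Lemma term_cont2 c x : c < 1 -> 0 < x -> continuity_pt (fun r => (1 - r*c) / sqrt (1 + r^2 - 2*r*c)^3) x.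
Proof.
  intros Hc Hx. apply cont_of_derive. pose proof (D_pos x c Hx Hc).
  assert (0 < sqrt (1 + x^2 - 2*x*c)) by (apply sqrt_lt_R0; auto).
  auto_derive.
  assert (E : 1 + x*(x*1) + - (2*x*c) = 1 + x^2 - 2*x*c) by ring. rewrite !E.
  repeat split; try lra. apply Rgt_not_eq. repeat apply Rmult_lt_0_compat; lra.
Qed.

Lemma csum_cont (f : nat -> R -> R) k x : (forall l, (l < k)%nat -> continuity_pt (f l) x) ->
  continuity_pt (fun r => csum (fun l => f l r) k) x.
Proof.
  induction k; intros H.
  - simpl. apply continuity_pt_const. intros a b; reflexivity.
  - simpl. apply (continuity_pt_ext (plus_fct (fun r => csum (fun l => f l r) k) (f k))).
    + intros; reflexivity.
    + apply continuity_pt_plus; [apply IHk; intros; apply H; lia| apply H; lia].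
Qed.

Lemma Uu_cont n x : (2 <= n)%nat -> 0 < x -> continuity_pt (Uu n) x.
Proof.
  intros Hn Hx. unfold Uu, Ssum.
  apply (csum_cont (fun l r => (r - cos (2 * PI * INR l / INR n + PI / INR n)) /
     sqrt (1 + r ^ 2 - 2 * r * cos (2 * PI * INR l / INR n + PI / INR n)) ^ 3) n x).
  intros l Hl. apply term_cont1; auto. apply cos_beta_lt1; auto.
Qed.

Lemma Ww_cont n x : (2 <= n)%nat -> 0 < x -> continuity_pt (Ww n) x.
Proof.
  intros Hn Hx. unfold Ww, Ssum.
  apply (csum_cont (fun l r => (1 - r * cos (2 * PI * INR l / INR n + PI / INR n)) /
     sqrt (1 + r ^ 2 - 2 * r * cos (2 * PI * INR l / INR n + PI / INR n)) ^ 3) n x).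
  intros l Hl. apply term_cont2; auto. apply cos_beta_lt1; auto.
Qed.

Definition Ff n r := (INR n - sS n)^2 - (r^2 * Uu n r - INR n) * (Ww n r - INR n).

Lemma mFf_cont n x : (2 <= n)%nat -> 0 < x -> continuity_pt (fun r => - Ff n r) x.
Proof.
  intros Hn Hx.
  apply (continuity_pt_ext (fun r => (fun r => (r^2 * Uu n r - INR n)) r * (fun r => Ww n r - INR n) r - (INR n - sS n)^2)).
  { intros; unfold Ff; ring. }
  apply (continuity_pt_ext (minus_fct (mult_fct (fun r => (r^2 * Uu n r - INR n)) (fun r => Ww n r - INR n)) (fun _ => (INR n - sS n)^2))).
  { intros; reflexivity. }
  apply continuity_pt_minus; [| apply continuity_pt_const; intros a b; reflexivity].
  apply continuity_pt_mult.
  - apply (continuity_pt_ext (minus_fct (mult_fct (fun r => r^2) (Uu n)) (fun _ => INR n))); [intros; reflexivity|].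
    apply continuity_pt_minus; [| apply continuity_pt_const; intros a b; reflexivity].
    apply continuity_pt_mult; [| apply Uu_cont; auto].
    apply (continuity_pt_ext (mult_fct id id)); [intros; unfold mult_fct, id; ring|].
    apply continuity_pt_mult; apply continuity_pt_id.
  - apply (continuity_pt_ext (minus_fct (Ww n) (fun _ => INR n))); [intros; reflexivity|].
    apply continuity_pt_minus; [apply Ww_cont; auto| apply continuity_pt_const; intros a b; reflexivity].
Qed.

Lemma Uu_one n : Uu n 1 = tT n.
Proof.
  unfold Uu, tT, Ssum. apply csum_ext. intros l _. unfold Gc.
  f_equal. f_equal. f_equal. ring.
Qed.

Lemma Ww_one n : Ww n 1 = tT n.
Proof.
  unfold Ww, tT, Ssum. apply csum_ext. intros l _. unfold Gc.
  f_equal; [ring|]. f_equal. f_equal. ring.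
Qed.

Lemma root_exists n : (237 <= n)%nat ->
  exists r, 0 < r < 1 /\ Ff n r = 0 /\ sS n < r^3 * Ww n r /\ sS n < Ww n r.
Proof.
  intros Hn. assert (Hn2 : (2 <= n)%nat) by lia.
  destruct (analytic_facts n Hn) as [Hk [Hrb [Hrb2 [Hrb50 [Hrb4 [Hpos [HtN [Hst HST]]]]]]]].
  set (a := PI / INR n) in *. set (sg := sin a) in *. set (c1 := cos a) in *.
  set (t := tT n) in *. set (s := sS n) in *.
  set (kap := 3 * sg^3 * t) in *. set (rb := c1 - kap) in *.
  assert (HF1 : Ff n 1 < 0).
  { unfold Ff. rewrite Uu_one, Ww_one. fold t s.
    replace ((INR n - s) ^ 2 - (1 ^ 2 * t - INR n) * (t - INR n)) with (- ((t - s) * (s + t - 2 * INR n))) by ring.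
    assert (0 < (t - s) * (s + t - 2 * INR n)) by (apply Rmult_lt_0_compat; lra). lra. }
  assert (HWb : t <= Ww n rb) by (apply Ww_ge; auto; lra).
  assert (HUb : Uu n rb <= 0).
  { pose proof (Uu_le n rb Hn2 ltac:(lra)) as U.
    assert (Nl : (rb - cos (PI / INR n)) / sqrt (1 + rb ^ 2 - 2 * rb * cos (PI / INR n)) ^ 3 <= - kap / (3 * sg^3))
      by exact (nearest_le n kap Hn2 Hk).
    assert (E : - kap / (3 * sg^3) = - t).
    { unfold kap. field. assert (0 < sg) by lra. apply Rgt_not_eq. try apply pow_lt; lra. }
    rewrite E in Nl. change (tT n) with t in U.
    assert (t / rb^2 <= 2 * t).
    { assert (Ht0 : 0 < t) by (assert (0 < INR n) by (apply lt_0_INR; lia); lra).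
      apply (Rmult_le_reg_r (rb^2)); [lra|]. unfold Rdiv. rewrite Rmult_assoc, Rinv_l by lra.
      assert (0 <= t * (2 * rb^2 - 1)) by (apply Rmult_le_pos; lra). lra. }
    lra. }
  assert (HFb : 0 < - Ff n rb -> False).
  { intros H. unfold Ff in H.
    assert ((rb ^ 2 * Uu n rb - INR n) * (Ww n rb - INR n) < 0).
    { apply Rmult_neg_pos; [|lra]. assert (0 <= rb^2) by nra. assert (rb^2 * Uu n rb <= 0) by nra.
      assert (0 < INR n) by (apply lt_0_INR; lia). lra. }
    assert (0 <= (INR n - s)^2) by (apply pow2_ge_0). fold s in H. lra. }
  assert (HFb' : - Ff n rb < 0).
  { destruct (Rlt_le_dec (- Ff n rb) 0) as [h|h]; auto.
    exfalso. destruct h as [h|h]; [apply HFb; lra|].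
    unfold Ff in h.
    assert ((rb ^ 2 * Uu n rb - INR n) * (Ww n rb - INR n) < 0).
    { apply Rmult_neg_pos; [|lra]. assert (0 <= rb^2) by nra. assert (rb^2 * Uu n rb <= 0) by nra.
      assert (0 < INR n) by (apply lt_0_INR; lia). lra. }
    assert (0 <= (INR n - s)^2) by (apply pow2_ge_0). fold s in h. lra. }
  destruct (IVT_interv (fun r => - Ff n r) rb 1) as [z [Hz Hz0]].
  - intros x Hx. apply mFf_cont; auto. lra.
  - lra.
  - exact HFb'.
  - lra.
  - assert (Hz1 : z <> 1) by (intros ->; lra).
    assert (Hz01 : 0 < z < 1) by lra.
    exists z. split; [auto|]. split; [lra|].
    assert (HW : t <= Ww n z).
    { apply Ww_ge; auto; [lra|]. apply Rle_trans with ((1 - rb)^4); auto. apply pow_incr; lra. }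
    assert (Hz3 : 1 - 3 * (1 - rb) <= z^3).
    { assert (z^3 - (1 - 3*(1 - z)) = (1 - z)^2 * (2 + z)) by ring.
      assert (0 <= (1 - z)^2 * (2 + z)) by (apply Rmult_le_pos; [apply pow2_ge_0| lra]). lra. }
    split.
    + assert (0 <= 1 - 3 * (1 - rb)) by lra.
      assert ((1 - 3 * (1 - rb)) * t <= z^3 * Ww n z) by (pose proof (pos_INR n); apply Rmult_le_compat; lra).
      lra.
    + lra.
Qed.

Lemma small_pos p k : 0 < p -> exists h, 0 < h /\ forall tau, 0 <= tau <= h -> 0 < p + tau * k.
Proof.
  intros Hp. exists (p / (2 * (Rabs k + 1))). pose proof (Rabs_pos k).
  split; [apply Rdiv_lt_0_compat; lra|].
  intros tau [H1 H2].
  assert (tau * Rabs k <= p / 2).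
  { apply Rle_trans with (p / (2 * (Rabs k + 1)) * Rabs k); [apply Rmult_le_compat_r; lra|].
    apply (Rmult_le_reg_r (2 * (Rabs k + 1))); [lra|].
    replace (p / (2 * (Rabs k + 1)) * Rabs k * (2 * (Rabs k + 1))) with (p * Rabs k) by (field; lra).
    nra. }
  assert (- (tau * Rabs k) <= tau * k).
  { destruct (Rle_dec 0 k); [rewrite Rabs_right by lra; nra| rewrite Rabs_left by lra; nra]. }
  lra.
Qed.

Theorem proposition5 (n : nat) (hn : (237 <= n)%nat) :
  exists rho1 rho2 : R, 0 < rho1 /\ rho1 <= rho2 /\
    really_perverse n (two_ngon_config n rho1 rho2).
Proof.
  assert (Hn2 : (2 <= n)%nat) by lia.
  destruct (root_exists n hn) as [z [Hz [HF [Hp1 Hp2]]]].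
  exists z, 1. split; [lra|]. split; [lra|].
  set (u := z^2 * Uu n z) in *. set (w := Ww n z) in *. set (s := sS n) in *. set (N := INR n) in *.
  assert (HFe : (N - s)^2 - (u - N) * (w - N) = 0) by exact HF.
  set (D := w - s). assert (HD : 0 < D) by (unfold D; lra).
  set (p1 := (1 - z^3) / D). set (p0 := (w * z^3 - s) / D).
  set (k1 := (u - s) / D). set (k0 := - (s + w * (u - s) / D)).
  assert (Hz3 : z^3 < 1) by (clear - Hz; assert (0 < z*z) by nra; assert (z*z < 1) by nra; simpl; nra).
  assert (Hp1pos : 0 < p1) by (unfold p1; apply Rdiv_lt_0_compat; lra).
  assert (Hp0pos : 0 < p0) by (unfold p0; apply Rdiv_lt_0_compat; lra).
  destruct (small_pos p0 k0 Hp0pos) as [h0 [Hh0 P0]].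
  destruct (small_pos p1 k1 Hp1pos) as [h1 [Hh1 P1]].
  set (h := Rmin h0 h1).
  assert (Hh : 0 < h) by (unfold h; apply Rmin_pos; auto).
  assert (Hhh0 : h <= h0) by apply Rmin_l. assert (Hhh1 : h <= h1) by apply Rmin_r.
  set (mk := fun tau => (p0 + tau * k0, p1 + tau * k1, tau)).
  assert (Hsol : forall tau, 0 < tau <= h ->
     positive_system (mk tau) /\
     mass_moment (1 + 2 * n) (mass_of_system n (mk tau)) (two_ngon_config n z 1) = RtoC 0 /\
     is_nbody_solution (1 + 2 * n) (mass_of_system n (mk tau)) (rel_eq_motion (two_ngon_config n z 1))).
  { intros tau Htau. unfold mk. split; [|split].
    - unfold positive_system. split; [apply P0; lra| split; [apply P1; lra| lra]].
    - apply moment_zero; auto.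
    - apply solution_of_eqs; auto; [lra| |].
      + fold u s. unfold p0, p1, k0, k1, D. field. lra.
      + fold w s. unfold p0, p1, k0, k1, D. field. lra. }
  assert (Htot : forall tau, total_mass n (mk tau) = p0 + N * p1).
  { intros tau. unfold total_mass, mk. fold N.
    assert (E : p0 + tau * k0 + N * (p1 + tau * k1 + tau) = p0 + N * p1 + tau * (((N - s)^2 - (u - N) * (w - N)) / D)).
    { unfold p0, p1, k0, k1, D. field. lra. }
    rewrite E, HFe. unfold Rdiv. ring. }
  exists (mk (h/2)), (mk h).
  destruct (Hsol (h/2) ltac:(lra)) as [A1 [A2 A3]].
  destruct (Hsol h ltac:(lra)) as [B1 [B2 B3]].
  split.
  { unfold mk. intros E. injection E. lra. }
  split; [auto|]. split; [auto|]. split; [rewrite !Htot; reflexivity|].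
  split; [auto|]. split; [auto|]. split; auto.
Qed.
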